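(* Let $\mathbb{T}$ be a time scale with $\sup\mathbb{T}=+\infty$ and bounded graininess, and let the control system $x^\Delta=Ax+Bu$ ($A\in\mathbb{R}^{n\times n}$, $B\in\mathbb{R}^{n\times m}$) on $\mathbb{T}$ be positive. If it is positively stabilizable, then for every $\lambda\in\operatorname{spec}(A)$ with $\lambda\notin\mathcal{S}_\mathbb{T}$ one has $\operatorname{rank}[\lambda I-A,\ B]=n$.
   Context: $x^\Delta$ denotes the delta derivative on the time scale $\mathbb{T}$ (a closed nonempty subset of $\mathbb{R}$); controls are piecewise continuous. The control system $x^\Delta=Ax+Bu$ is positive if for every $t_0\in\mathbb{T}$, every control $u$ with values in $\mathbb{R}^m_+$ and every $x_0\in\mathbb{R}^n_+$, the trajectory with $x(t_0)=x_0$ stays in $\mathbb{R}^n_+$. An autonomous system $x^\Delta=Mx$ is positive if trajectories starting in $\mathbb{R}^n_+$ stay in $\mathbb{R}^n_+$; it is uniformly exponentially stable (resp. positively uniformly exponentially stable) if there exist $K\ge1,\alpha>0$ and an open neighborhood $V$ of $0$ with $\|x(t)\|\le Ke^{-\alpha(t-t_0)}\|x_0\|$ for all $t_0\le t$ in $\mathbb{T}$ and all $x_0\in V$ (resp. all $x_0\in V\cap\mathbb{R}^n_+$). The system is positively stabilizable if there is $K\in\mathbb{R}^{m\times n}$ such that $x^\Delta=(A+BK)x$ is positive and positively uniformly exponentially stable. $\mathcal{S}_\mathbb{T}$ is the set of $\lambda\in\mathbb{C}$ for which the scalar equation $x^\Delta=\lambda x$ is uniformly exponentially stable. *)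

(* Defs.v *)
From Stdlib Require Import Reals List Arith ClassicalEpsilon.
Open Scope R_scope.

Fixpoint rsum (k : nat) (f : nat -> R) : R :=
  match k with O => 0 | S k' => rsum k' f + f k' end.

(* vectors of R^d are functions nat -> R, only indices < d matter *)
Definition vec := nat -> R.
Definition vadd (x y : vec) : vec := fun i => x i + y i.
Definition vsub (x y : vec) : vec := fun i => x i - y i.
Definition vscal (a : R) (x : vec) : vec := fun i => a * x i.
Definition vnorm (d : nat) (x : vec) : R := sqrt (rsum d (fun i => x i ^ 2)).
Definition vzero : vec := fun _ => 0.
Definition mat_vec (d : nat) (M : nat -> nat -> R) (x : vec) : vec :=
  fun i => rsum d (fun j => M i j * x j).
Definition nonneg (d : nat) (x : vec) : Prop := forall i, (i < d)%nat -> 0 <= x i.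

Definition Cpx := (R * R)%type.
Definition cx0 : Cpx := (0, 0).
Definition cxR (r : R) : Cpx := (r, 0).
Definition cxadd (z w : Cpx) : Cpx := (fst z + fst w, snd z + snd w).
Definition cxsub (z w : Cpx) : Cpx := (fst z - fst w, snd z - snd w).
Definition cxmul (z w : Cpx) : Cpx :=
  (fst z * fst w - snd z * snd w, fst z * snd w + snd z * fst w).
Definition cxscal (a : R) (z : Cpx) : Cpx := (a * fst z, a * snd z).
Definition cxnorm (z : Cpx) : R := sqrt (fst z ^ 2 + snd z ^ 2).
Fixpoint cxsum (k : nat) (f : nat -> Cpx) : Cpx :=
  match k with O => cx0 | S k' => cxadd (cxsum k' f) (f k') end.

Definition in_spec (n : nat) (A : nat -> nat -> R) (lam : Cpx) : Prop :=
  exists v : nat -> Cpx, (exists i, (i < n)%nat /\ v i <> cx0) /\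
    forall i, (i < n)%nat ->
      cxsum n (fun j => cxmul (cxR (A i j)) (v j)) = cxmul lam (v i).

Definition cols_indep (p : nat) (M : nat -> nat -> Cpx) (r : nat) (sel : nat -> nat)
  : Prop :=
  forall a : nat -> Cpx,
    (forall i, (i < p)%nat -> cxsum r (fun k => cxmul (a k) (M i (sel k))) = cx0) ->
    forall k, (k < r)%nat -> a k = cx0.
Definition has_rank (p q : nat) (M : nat -> nat -> Cpx) (r : nat) : Prop :=
  (exists sel, (forall k, (k < r)%nat -> (sel k < q)%nat) /\ cols_indep p M r sel) /\
  (forall sel, (forall k, (k < S r)%nat -> (sel k < q)%nat) ->
     ~ cols_indep p M (S r) sel).

(* the n x (n+m) complex matrix [lam I - A, B] *)
Definition pbh_matrix (n : nat) (A B : nat -> nat -> R) (lam : Cpx)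
  : nat -> nat -> Cpx :=
  fun i j => if (j <? n)%nat
             then cxsub (if (i =? j)%nat then lam else cx0) (cxR (A i j))
             else cxR (B i (j - n)%nat).

Definition is_time_scale (T : R -> Prop) : Prop :=
  (exists t, T t) /\
  (forall x, (forall e, 0 < e -> exists y, T y /\ Rabs (y - x) < e) -> T x).
Definition unbounded_above (T : R -> Prop) : Prop :=
  forall M, exists t, T t /\ M < t.

Definition is_inf (P : R -> Prop) (s : R) : Prop :=
  (forall r, P r -> s <= r) /\ (forall s', (forall r, P r -> s' <= r) -> s' <= s).
Definition fjump (T : R -> Prop) (t : R) : R :=
  epsilon (inhabits 0) (fun s => is_inf (fun r => T r /\ t < r) s).
Definition graininess (T : R -> Prop) (t : R) : R := fjump T t - t.
Definition bounded_graininess (T : R -> Prop) : Prop :=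
  exists Mu, forall t, T t -> graininess T t <= Mu.

Definition dom (T : R -> Prop) (t0 : R) : R -> Prop := fun s => T s /\ t0 <= s.

Definition delta_deriv_at {X : Type} (sub : X -> X -> X) (scal : R -> X -> X)
  (nrm : X -> R) (T D : R -> Prop) (x : R -> X) (t : R) (v : X) : Prop :=
  forall eps, 0 < eps -> exists del, 0 < del /\
    forall s, D s -> Rabs (s - t) < del ->
      nrm (sub (sub (x (fjump T t)) (x s)) (scal (fjump T t - s) v))
        <= eps * Rabs (fjump T t - s).

Definition cont_rel {X : Type} (sub : X -> X -> X) (nrm : X -> R)
  (D : R -> Prop) (x : R -> X) (t : R) : Prop :=
  forall eps, 0 < eps -> exists del, 0 < del /\
    forall s, D s -> Rabs (s - t) < del -> nrm (sub (x s) (x t)) < eps.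

Definition left_lim_exists (T : R -> Prop) (m : nat) (u : R -> vec) (t : R) : Prop :=
  exists l, forall eps, 0 < eps -> exists del, 0 < del /\
    forall s, T s -> t - del < s < t -> vnorm m (vsub (u s) l) < eps.
Definition right_lim_exists (T : R -> Prop) (m : nat) (u : R -> vec) (t : R) : Prop :=
  exists l, forall eps, 0 < eps -> exists del, 0 < del /\
    forall s, T s -> t < s < t + del -> vnorm m (vsub (u s) l) < eps.
Definition pw_continuous (T : R -> Prop) (m : nat) (u : R -> vec) : Prop :=
  forall a b, exists L : list R, forall t, T t -> a <= t <= b ->
    (~ In t L -> cont_rel vsub (vnorm m) T u t) /\
    left_lim_exists T m u t /\ right_lim_exists T m u t.

Definition ctrl_solution (T : R -> Prop) (n m : nat) (A B : nat -> nat -> R)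
  (u : R -> vec) (t0 : R) (x0 : vec) (x : R -> vec) : Prop :=
  (forall i, (i < n)%nat -> x t0 i = x0 i) /\
  forall t, dom T t0 t ->
    cont_rel vsub (vnorm n) (dom T t0) x t /\
    ((t < fjump T t \/ cont_rel vsub (vnorm m) T u t) ->
     delta_deriv_at vsub vscal (vnorm n) T (dom T t0) x t
       (vadd (mat_vec n A (x t)) (mat_vec m B (u t)))).

Definition aut_solution (T : R -> Prop) (n : nat) (M : nat -> nat -> R)
  (t0 : R) (x0 : vec) (x : R -> vec) : Prop :=
  (forall i, (i < n)%nat -> x t0 i = x0 i) /\
  forall t, dom T t0 t ->
    cont_rel vsub (vnorm n) (dom T t0) x t /\
    delta_deriv_at vsub vscal (vnorm n) T (dom T t0) x t (mat_vec n M (x t)).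

Definition cx_solution (T : R -> Prop) (lam : Cpx) (t0 : R) (x0 : Cpx)
  (x : R -> Cpx) : Prop :=
  x t0 = x0 /\
  forall t, dom T t0 t ->
    cont_rel cxsub cxnorm (dom T t0) x t /\
    delta_deriv_at cxsub cxscal cxnorm T (dom T t0) x t (cxmul lam (x t)).

Definition positive_control_system (T : R -> Prop) (n m : nat)
  (A B : nat -> nat -> R) : Prop :=
  forall t0, T t0 -> forall u, pw_continuous T m u ->
    (forall t, T t -> nonneg m (u t)) ->
    forall x0, nonneg n x0 -> forall x, ctrl_solution T n m A B u t0 x0 x ->
      forall t, dom T t0 t -> nonneg n (x t).

Definition positive_aut (T : R -> Prop) (n : nat) (M : nat -> nat -> R) : Prop :=
  forall t0, T t0 -> forall x0, nonneg n x0 -> forall x, aut_solution T n M t0 x0 x ->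
    forall t, dom T t0 t -> nonneg n (x t).

Definition open_nbhd0 (n : nat) (V : vec -> Prop) : Prop :=
  V vzero /\ forall x, V x -> exists r, 0 < r /\
    forall y, vnorm n (vsub y x) < r -> V y.

Definition pos_unif_exp_stable (T : R -> Prop) (n : nat) (M : nat -> nat -> R)
  : Prop :=
  exists K al V, 1 <= K /\ 0 < al /\ open_nbhd0 n V /\
    forall t0 t, T t0 -> T t -> t0 <= t ->
      forall x0, V x0 -> nonneg n x0 -> forall x, aut_solution T n M t0 x0 x ->
        vnorm n (x t) <= K * exp (- al * (t - t0)) * vnorm n x0.

Definition closed_loop (m : nat) (A B K : nat -> nat -> R) : nat -> nat -> R :=
  fun i j => A i j + rsum m (fun k => B i k * K k j).

Definition positively_stabilizable (T : R -> Prop) (n m : nat)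
  (A B : nat -> nat -> R) : Prop :=
  exists K : nat -> nat -> R,
    positive_aut T n (closed_loop m A B K) /\
    pos_unif_exp_stable T n (closed_loop m A B K).

Definition cx_open_nbhd0 (V : Cpx -> Prop) : Prop :=
  V cx0 /\ forall z, V z -> exists r, 0 < r /\
    forall w, cxnorm (cxsub w z) < r -> V w.

Definition in_S_T (T : R -> Prop) (lam : Cpx) : Prop :=
  exists K al V, 1 <= K /\ 0 < al /\ cx_open_nbhd0 V /\
    forall t0 t, T t0 -> T t -> t0 <= t ->
      forall x0, V x0 -> forall x, cx_solution T lam t0 x0 x ->
        cxnorm (x t) <= K * exp (- al * (t - t0)) * cxnorm x0.

(* Main.v *)
Require Import Defs.
From Stdlib Require Import Reals Lra Lia List Classical ClassicalEpsilon ZArith.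
From Coquelicot Require Import Coquelicot.
Open Scope R_scope.


Lemma rsum_ext : forall r f g, (forall k, (k < r)%nat -> f k = g k) -> rsum r f = rsum r g.
Proof. induction r; intros f g H; simpl; auto. rewrite (IHr f g); [|intros; apply H; lia]. rewrite H; auto. Qed.

Lemma rsum_plus : forall r f g, rsum r (fun k => f k + g k) = rsum r f + rsum r g.
Proof. induction r; intros; simpl; [lra|rewrite IHr; lra]. Qed.

Lemma rsum_minus : forall r f g, rsum r (fun k => f k - g k) = rsum r f - rsum r g.
Proof. induction r; intros; simpl; [lra|rewrite IHr; lra]. Qed.

Lemma rsum_scal : forall r c f, rsum r (fun k => c * f k) = c * rsum r f.
Proof. induction r; intros; simpl; [lra|rewrite IHr; lra]. Qed.

Lemma rsum_zero : forall r f, (forall k, (k < r)%nat -> f k = 0) -> rsum r f = 0.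
Proof. induction r; intros f H; simpl; auto. rewrite IHr; [rewrite H; [lra|lia]|intros; apply H; lia]. Qed.

Lemma rsum_swap : forall p q F, rsum p (fun i => rsum q (fun j => F i j)) = rsum q (fun j => rsum p (fun i => F i j)).
Proof.
  induction p; intros; simpl.
  - symmetry; apply rsum_zero; auto.
  - rewrite IHp. rewrite <- rsum_plus. auto.
Qed.

Lemma rsum_le : forall r f g, (forall k, (k < r)%nat -> f k <= g k) -> rsum r f <= rsum r g.
Proof. induction r; intros f g H; simpl; [lra|]. assert (rsum r f <= rsum r g) by (apply IHr; intros; apply H; lia).
  assert (f r <= g r) by (apply H; lia). lra. Qed.

Lemma rsum_nonneg : forall r f, (forall k, (k < r)%nat -> 0 <= f k) -> 0 <= rsum r f.
Proof. intros. replace 0 with (rsum r (fun _ => 0)) by (apply rsum_zero; auto). apply rsum_le; auto. Qed.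

Lemma rsum_abs : forall r f, Rabs (rsum r f) <= rsum r (fun k => Rabs (f k)).
Proof. induction r; intros; simpl. rewrite Rabs_R0; lra.
  eapply Rle_trans; [apply Rabs_triang|]. specialize (IHr f). lra. Qed.

Lemma rsum_single : forall r f j, (j < r)%nat -> (forall k, (k < r)%nat -> k <> j -> f k = 0) -> rsum r f = f j.
Proof.
  induction r; intros f j Hj H; [lia|]. simpl.
  destruct (Nat.eq_dec j r).
  - subst. rewrite rsum_zero; [lra|]. intros; apply H; lia.
  - rewrite (IHr f j); [|lia|intros; apply H; lia]. rewrite (H r); [lra|lia|auto].
Qed.

Lemma rsum_term_le : forall r f j, (j < r)%nat -> (forall k, (k < r)%nat -> 0 <= f k) -> f j <= rsum r f.
Proof.
  induction r; intros f j Hj H; [lia|]. simpl.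
  destruct (Nat.eq_dec j r).
  - subst. assert (0 <= rsum r f) by (apply rsum_nonneg; intros; apply H; lia). lra.
  - assert (f j <= rsum r f) by (apply IHr; [lia|intros; apply H; lia]). assert (0 <= f r) by (apply H; lia). lra.
Qed.

Lemma cx_eq : forall z w : Cpx, fst z = fst w -> snd z = snd w -> z = w.
Proof. intros [a b] [c d]; simpl; intros; subst; auto. Qed.

Lemma fst_cxsum : forall r f, fst (cxsum r f) = rsum r (fun k => fst (f k)).
Proof. induction r; intros; simpl; auto. rewrite IHr; auto. Qed.
Lemma snd_cxsum : forall r f, snd (cxsum r f) = rsum r (fun k => snd (f k)).
Proof. induction r; intros; simpl; auto. rewrite IHr; auto. Qed.

Definition cx1 : Cpx := (1, 0).
Definition cxneg (z : Cpx) : Cpx := (- fst z, - snd z).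
Definition cxinv (z : Cpx) : Cpx :=
  (fst z / (fst z ^ 2 + snd z ^ 2), - snd z / (fst z ^ 2 + snd z ^ 2)).
Definition cxdiv (z w : Cpx) : Cpx := cxmul z (cxinv w).

Lemma cx_nz_pos : forall z, z <> cx0 -> 0 < fst z ^ 2 + snd z ^ 2.
Proof.
  intros [a b] H; simpl.
  destruct (Req_dec a 0); destruct (Req_dec b 0).
  - subst; exfalso; apply H; auto.
  - assert (0 < b*b) by (apply Rsqr_pos_lt; auto). nra.
  - assert (0 < a*a) by (apply Rsqr_pos_lt; auto). nra.
  - assert (0 < a*a) by (apply Rsqr_pos_lt; auto). nra.
Qed.

Lemma cxmul_inv : forall z, z <> cx0 -> cxmul z (cxinv z) = cx1.
Proof.
  intros z H. pose proof (cx_nz_pos z H). destruct z as [a b]. unfold cxmul, cxinv, cx1; simpl in *.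
  apply cx_eq; simpl; field; lra.
Qed.

Lemma cxmul_eq0 : forall z w, z <> cx0 -> cxmul z w = cx0 -> w = cx0.
Proof.
  intros z w H E. pose proof (cx_nz_pos z H). destruct z as [a b], w as [c d]. unfold cxmul, cx0 in *; simpl in *.
  injection E; intros E1 E2.
  assert (c * (a^2+b^2) = 0) by (replace (c * (a^2+b^2)) with (a*(a*c-b*d) + b*(a*d+b*c)) by ring; rewrite E1, E2; ring).
  assert (d * (a^2+b^2) = 0) by (replace (d * (a^2+b^2)) with (a*(a*d+b*c) - b*(a*c-b*d)) by ring; rewrite E1, E2; ring).
  apply Rmult_integral in H1; apply Rmult_integral in H2. f_equal; lra.
Qed.

Ltac cxsimpl := repeat match goal with z : Cpx |- _ => destruct z end;
  unfold cxmul, cxadd, cxsub, cxneg, cxdiv, cxinv, cxscal, cxR, cx0, cx1 in *; simpl in *.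

Lemma cxsum_zero : forall r f, (forall k, (k < r)%nat -> f k = cx0) -> cxsum r f = cx0.
Proof. intros. apply cx_eq; rewrite ?fst_cxsum, ?snd_cxsum; apply rsum_zero; intros; rewrite H; auto. Qed.

Lemma cxsum_ext : forall r f g, (forall k, (k < r)%nat -> f k = g k) -> cxsum r f = cxsum r g.
Proof. intros. apply cx_eq; rewrite ?fst_cxsum, ?snd_cxsum; apply rsum_ext; intros; rewrite H; auto. Qed.

Lemma cxsum_add : forall r f g, cxsum r (fun k => cxadd (f k) (g k)) = cxadd (cxsum r f) (cxsum r g).
Proof. intros. apply cx_eq; simpl; rewrite ?fst_cxsum, ?snd_cxsum; apply rsum_plus. Qed.

Lemma cxsum_sub : forall r f g, cxsum r (fun k => cxsub (f k) (g k)) = cxsub (cxsum r f) (cxsum r g).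
Proof. intros. apply cx_eq; simpl; rewrite ?fst_cxsum, ?snd_cxsum; apply rsum_minus. Qed.

Lemma cxsum_mul_l : forall r c f, cxsum r (fun k => cxmul c (f k)) = cxmul c (cxsum r f).
Proof.
  intros. apply cx_eq; simpl; rewrite ?fst_cxsum, ?snd_cxsum; simpl.
  - rewrite rsum_minus, !rsum_scal; auto.
  - rewrite rsum_plus, !rsum_scal; auto.
Qed.

Lemma cxsum_swap : forall p q F, cxsum p (fun i => cxsum q (fun j => F i j)) = cxsum q (fun j => cxsum p (fun i => F i j)).
Proof.
  intros. apply cx_eq; rewrite ?fst_cxsum, ?snd_cxsum.
  - rewrite (rsum_ext p _ (fun i => rsum q (fun j => fst (F i j)))) by (intros; apply fst_cxsum).
    rewrite rsum_swap. apply rsum_ext; intros; rewrite fst_cxsum; auto.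
  - rewrite (rsum_ext p _ (fun i => rsum q (fun j => snd (F i j)))) by (intros; apply snd_cxsum).
    rewrite rsum_swap. apply rsum_ext; intros; rewrite snd_cxsum; auto.
Qed.


Lemma hom_sys : forall q (L : list (nat -> Cpx)), (length L < q)%nat ->
  exists a : nat -> Cpx, (exists j, (j < q)%nat /\ a j <> cx0) /\
    forall f, In f L -> cxsum q (fun j => cxmul (f j) (a j)) = cx0.
Proof.
  induction q as [|q IH]; intros L HL; [lia|].
  destruct (classic (forall f, In f L -> f q = cx0)) as [Hall|Hex].
  - exists (fun j => if (j =? q)%nat then cx1 else cx0). split.
    + exists q; split; [lia|]. rewrite Nat.eqb_refl. unfold cx1, cx0; intro E; injection E; lra.
    + intros f Hf. simpl. rewrite cxsum_zero.
      * rewrite Nat.eqb_refl, (Hall f Hf). apply cx_eq; simpl; ring.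
      * intros k Hk. assert ((k =? q)%nat = false) by (apply Nat.eqb_neq; lia). rewrite H.
        apply cx_eq; simpl; ring.
  - apply not_all_ex_not in Hex. destruct Hex as [g Hg].
    apply imply_to_and in Hg. destruct Hg as [HgL Hgq].
    destruct (in_split g L HgL) as [L1 [L2 HL12]].
    set (L' := map (fun f => fun j => cxsub (f j) (cxmul (cxdiv (f q) (g q)) (g j))) (L1 ++ L2)).
    assert (length L' < q)%nat.
    { unfold L'. rewrite length_map, length_app. subst L. rewrite length_app in HL. simpl in HL. lia. }
    destruct (IH L' H) as [a' [[j0 [Hj0 Ha0]] Ha']].
    set (Sg := cxsum q (fun j => cxmul (g j) (a' j))).
    exists (fun j => if (j <? q)%nat then a' j else cxneg (cxdiv Sg (g q))). split.
    + exists j0. split; [lia|]. assert ((j0 <? q)%nat = true) by (apply Nat.ltb_lt; lia). rewrite H0; auto.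
    + intros f Hf. simpl.
      assert (Hq : (q <? q)%nat = false) by (apply Nat.ltb_irrefl). rewrite Hq.
      rewrite (cxsum_ext q _ (fun j => cxmul (f j) (a' j))).
      2:{ intros k Hk. assert ((k <? q)%nat = true) by (apply Nat.ltb_lt; lia). rewrite H0; auto. }
      pose proof (cxmul_inv (g q) Hgq) as Hinv.
      subst L. apply in_app_or in Hf. destruct Hf as [Hf|[Hf|Hf]].
      2:{ subst f. fold Sg. destruct Sg as [s1 s2]. destruct (g q) as [g1 g2].
          unfold cxmul, cxinv, cxneg, cxdiv, cxadd, cx1, cx0 in *; simpl in *. pose proof (cx_nz_pos (g1,g2) Hgq); simpl in *.
          apply cx_eq; simpl; field; lra. }
      all: assert (Hin : In (fun j => cxsub (f j) (cxmul (cxdiv (f q) (g q)) (g j))) L') by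
          (unfold L'; apply (in_map (fun f => fun j => cxsub (f j) (cxmul (cxdiv (f q) (g q)) (g j)))); apply in_or_app; auto).
      all: specialize (Ha' _ Hin).
      all: assert (E : cxsum q (fun j => cxmul (f j) (a' j)) = cxmul (cxdiv (f q) (g q)) Sg) by
         (unfold Sg; rewrite <- cxsum_mul_l;
          assert (E2 : cxsub (cxsum q (fun j => cxmul (f j) (a' j))) (cxsum q (fun j => cxmul (cxdiv (f q) (g q)) (cxmul (g j) (a' j))))
            = cx0) by (rewrite <- cxsum_sub; rewrite <- Ha'; apply cxsum_ext; intros; cxsimpl; apply cx_eq; simpl; ring);
          destruct (cxsum q (fun j => cxmul (f j) (a' j))), (cxsum q (fun j => cxmul (cxdiv (f q) (g q)) (cxmul (g j) (a' j))));
          unfold cxsub, cx0 in E2; injection E2; intros; apply cx_eq; simpl; lra).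
      all: rewrite E; fold Sg; destruct Sg as [s1 s2]; destruct (g q) as [g1 g2]; destruct (f q) as [f1 f2];
          unfold cxmul, cxinv, cxneg, cxdiv, cxadd, cx1, cx0 in *; simpl in *; injection Hinv; intros;
          apply cx_eq; simpl; field; pose proof (cx_nz_pos (g1,g2) Hgq); simpl in *; lra.
Qed.

Ltac cxring := cxsimpl; apply cx_eq; simpl; ring.

Lemma in_rows : forall (F : nat -> nat -> Cpx) p i, (i < p)%nat -> In (F i) (map F (seq 0 p)).
Proof. intros. apply in_map. apply in_seq. lia. Qed.

Lemma dep_more : forall p r M sel, (p < r)%nat -> ~ cols_indep p M r sel.
Proof.
  intros p r M sel Hpr Hind.
  destruct (hom_sys r (map (fun i => fun k => M i (sel k)) (seq 0 p))) as [a [[j [Hj Ha]] Hs]].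
  { rewrite length_map, length_seq; auto. }
  apply Ha. apply (Hind a); auto.
  intros i Hi. rewrite <- (Hs (fun k => M i (sel k))).
  - apply cxsum_ext; intros; cxring.
  - apply (in_rows (fun i k => M i (sel k))); auto.
Qed.

Lemma max_nat : forall (P : nat -> Prop) b, P 0%nat -> (forall r, P r -> (r <= b)%nat) ->
  exists r, P r /\ forall r', P r' -> (r' <= r)%nat.
Proof.
  intros P b H0 Hb. apply NNPP; intro Hn.
  assert (forall k, exists r, P r /\ (k <= r)%nat).
  { induction k. exists 0%nat; split; auto; lia.
    destruct IHk as [r [Pr Hr]].
    assert (~ (forall r', P r' -> (r' <= r)%nat)) by (intro; apply Hn; eauto).
    apply not_all_ex_not in H. destruct H as [r' H]. apply imply_to_and in H. destruct H.
    exists r'; split; auto; lia. }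
  destruct (H (S b)) as [r [Pr Hr]]. specialize (Hb r Pr). lia.
Qed.

Lemma rank_or_left : forall p q M,
  (exists sel, (forall k, (k < p)%nat -> (sel k < q)%nat) /\ cols_indep p M p sel) \/
  (exists w : nat -> Cpx, (exists i, (i < p)%nat /\ w i <> cx0) /\
     forall j, (j < q)%nat -> cxsum p (fun i => cxmul (w i) (M i j)) = cx0).
Proof.
  intros p q M.
  set (P := fun r => exists sel, (forall k, (k < r)%nat -> (sel k < q)%nat) /\ cols_indep p M r sel).
  destruct (max_nat P p) as [r [[sel [Hsel Hind]] Hmax]].
  - exists (fun _ => 0%nat). split; [intros; lia|]. intros a _ k Hk; lia.
  - intros r [sel [_ Hi]]. destruct (Compare_dec.le_lt_dec r p); auto. exfalso; eapply dep_more; eauto.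
  - assert (r <= p)%nat by (destruct (Compare_dec.le_lt_dec r p); auto; exfalso; eapply dep_more; eauto).
    destruct (Nat.eq_dec r p) as [E|Ne]; [left; subst; eauto|right].
    destruct (hom_sys p (map (fun k => fun i => M i (sel k)) (seq 0 r))) as [w [Hw Hws]].
    { rewrite length_map, length_seq; lia. }
    exists w; split; auto.
    intros j Hj.
    set (sel' := fun k => if (k =? r)%nat then j else sel k).
    assert (~ cols_indep p M (S r) sel').
    { intro Hc. assert (P (S r)). { exists sel'; split; auto. intros k Hk. unfold sel'.
        destruct (Nat.eqb_spec k r); auto. apply Hsel; lia. }
      specialize (Hmax _ H0). lia. }
    unfold cols_indep in H0. apply not_all_ex_not in H0. destruct H0 as [a H0].
    apply imply_to_and in H0. destruct H0 as [Heq Hnz].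
    apply not_all_ex_not in Hnz. destruct Hnz as [k0 Hk0]. apply imply_to_and in Hk0. destruct Hk0 as [Hk0 Hak0].
    assert (Heq' : forall i, (i < p)%nat ->
       cxadd (cxsum r (fun k => cxmul (a k) (M i (sel k)))) (cxmul (a r) (M i j)) = cx0).
    { intros i Hi. rewrite <- (Heq i Hi). simpl. unfold sel'. rewrite Nat.eqb_refl. f_equal.
      apply cxsum_ext; intros k Hk. assert ((k =? r)%nat = false) by (apply Nat.eqb_neq; lia). match goal with E: (_ =? _)%nat = false |- _ => rewrite E end; auto. }
    assert (Har : a r <> cx0).
    { intro Ar. apply Hak0. assert (forall k, (k < r)%nat -> a k = cx0).
      { apply Hind. intros i Hi. specialize (Heq' i Hi). rewrite Ar in Heq'.
        destruct (cxsum r (fun k => cxmul (a k) (M i (sel k)))). cxsimpl. injection Heq'; intros.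
        apply cx_eq; simpl; lra. }
      destruct (Nat.eq_dec k0 r); [subst; auto|]. apply H0; lia. }
    apply (cxmul_eq0 (a r)); auto.
    rewrite <- cxsum_mul_l.
    rewrite (cxsum_ext p _ (fun i => cxneg (cxmul (w i) (cxsum r (fun k => cxmul (a k) (M i (sel k))))))).
    2:{ intros i Hi. specialize (Heq' i Hi). destruct (cxsum r (fun k => cxmul (a k) (M i (sel k)))) as [u v].
        destruct (a r) as [a1 a2], (M i j) as [m1 m2], (w i) as [w1 w2]. cxsimpl. injection Heq'; intros.
        apply cx_eq; simpl; nra. }
    rewrite (cxsum_ext p _ (fun i => cxneg (cxsum r (fun k => cxmul (a k) (cxmul (M i (sel k)) (w i)))))).
    2:{ intros i Hi. f_equal. rewrite <- cxsum_mul_l. apply cxsum_ext; intros; cxring. }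
    assert (forall r f, cxsum r (fun k => cxneg (f k)) = cxneg (cxsum r f)) as Hneg.
    { intros r0 f. induction r0; simpl. apply cx_eq; simpl; ring. rewrite IHr0. cxring. }
    rewrite Hneg, cxsum_swap.
    rewrite cxsum_zero; [apply cx_eq; simpl; ring|].
    intros k Hk. rewrite cxsum_mul_l. rewrite (Hws (fun i => M i (sel k))).
    + apply cx_eq; simpl; ring.
    + apply (in_rows (fun k i => M i (sel k))); auto.
Qed.

Lemma rank_full : forall p q M,
  (forall w : nat -> Cpx, (forall j, (j < q)%nat -> cxsum p (fun i => cxmul (w i) (M i j)) = cx0) ->
     forall i, (i < p)%nat -> w i = cx0) ->
  has_rank p q M p.
Proof.
  intros p q M H. split.
  - destruct (rank_or_left p q M) as [H1|[w [[i [Hi Hwi]] Hw]]]; auto.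
    exfalso. apply Hwi. apply (H w Hw i Hi).
  - intros sel _. apply dep_more. lia.
Qed.


Lemma cxn_tri : forall z w, cxnorm (cxadd z w) <= cxnorm z + cxnorm w.
Proof. intros. exact (Cmod_triangle z w). Qed.
Lemma cxn_mul : forall z w, cxnorm (cxmul z w) = cxnorm z * cxnorm w.
Proof. intros. exact (Cmod_mult z w). Qed.
Lemma cxn_ge0 : forall z, 0 <= cxnorm z.
Proof. intros. exact (Cmod_ge_0 z). Qed.
Lemma cxn_eq0 : forall z, cxnorm z = 0 -> z = cx0.
Proof. intros. exact (Cmod_eq_0 z H). Qed.
Lemma cxn_0 : cxnorm cx0 = 0.
Proof. exact Cmod_0. Qed.
Lemma cxn_R : forall a, cxnorm (cxR a) = Rabs a.
Proof. intros. exact (Cmod_R a). Qed.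
Lemma cxn_neg : forall z, cxnorm (cxneg z) = cxnorm z.
Proof. intros. exact (Cmod_opp z). Qed.
Lemma cxscal_mul : forall a z, cxscal a z = cxmul (cxR a) z.
Proof. intros a [x y]; apply cx_eq; simpl; ring. Qed.
Lemma cxn_scal : forall a z, cxnorm (cxscal a z) = Rabs a * cxnorm z.
Proof. intros. rewrite cxscal_mul, cxn_mul, cxn_R; auto. Qed.
Lemma cxsub_add_neg : forall z w, cxsub z w = cxadd z (cxneg w).
Proof. intros [a b] [c d]; apply cx_eq; simpl; ring. Qed.
Lemma cxn_sub_tri : forall z w, cxnorm (cxsub z w) <= cxnorm z + cxnorm w.
Proof. intros. rewrite cxsub_add_neg. eapply Rle_trans; [apply cxn_tri|]. rewrite cxn_neg; lra. Qed.
Lemma cxn_sub_sym : forall z w, cxnorm (cxsub z w) = cxnorm (cxsub w z).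
Proof. intros. replace (cxsub w z) with (cxneg (cxsub z w)) by (destruct z, w; apply cx_eq; simpl; ring).
  rewrite cxn_neg; auto. Qed.

Section FJ.
Variable T : R -> Prop.
Hypothesis HT : is_time_scale T.
Hypothesis Hu : unbounded_above T.

Lemma inf_exists : forall t, exists s, is_inf (fun r => T r /\ t < r) s.
Proof.
  intro t. destruct (Hu t) as [r0 [Hr0 Hlt]].
  set (E := fun x => T (- x) /\ t < - x).
  assert (bound E) by (exists (- t); intros x [_ Hx]; lra).
  assert (exists x, E x) by (exists (- r0); unfold E; rewrite Ropp_involutive; auto).
  destruct (completeness E H H0) as [m [Hub Hlub]].
  exists (- m). split.
  - intros r [Tr Hr]. assert (E (- r)) by (unfold E; rewrite Ropp_involutive; auto).
    specialize (Hub _ H1). lra.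
  - intros s' Hs'. assert (m <= - s').
    { apply Hlub. intros x [Tx Hx]. specialize (Hs' (- x) (conj Tx Hx)). lra. }
    lra.
Qed.

Lemma fj_inf : forall t, is_inf (fun r => T r /\ t < r) (fjump T t).
Proof.
  intro t. unfold fjump. apply epsilon_spec. apply inf_exists.
Qed.

Lemma fj_ge : forall t, t <= fjump T t.
Proof. intro t. destruct (fj_inf t) as [_ H]. apply H. intros r [_ Hr]; lra. Qed.

Lemma fj_le : forall t r, T r -> t < r -> fjump T t <= r.
Proof. intros t r Tr Hr. destruct (fj_inf t) as [H _]. apply H; auto. Qed.

Lemma fj_approx : forall t e, 0 < e -> exists r, T r /\ t < r /\ r < fjump T t + e.
Proof.
  intros t e He. apply NNPP; intro Hn.
  destruct (fj_inf t) as [_ H].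
  assert (fjump T t + e <= fjump T t).
  { apply H. intros r [Tr Hr]. destruct (Rlt_le_dec r (fjump T t + e)); auto.
    exfalso; apply Hn; eauto. }
  lra.
Qed.

Lemma fj_T : forall t, T (fjump T t).
Proof.
  intro t. destruct HT as [_ Hc]. apply Hc. intros e He.
  destruct (fj_approx t e He) as [r [Tr [Hr1 Hr2]]].
  exists r; split; auto. pose proof (fj_le t r Tr Hr1). rewrite Rabs_right; lra.
Qed.

Lemma fj_rd : forall t, fjump T t = t -> forall e, 0 < e -> exists r, T r /\ t < r /\ r < t + e.
Proof. intros t E e He. destruct (fj_approx t e He) as [r H]. rewrite E in H. eauto. Qed.

Lemma fj_unique : forall t s, is_inf (fun r => T r /\ t < r) s -> fjump T t = s.
Proof.
  intros t s [H1 H2]. destruct (fj_inf t) as [H3 H4].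
  apply Rle_antisym; [apply H2|apply H4]; auto.
Qed.

Lemma ts_ind : forall t0 (P : R -> Prop), T t0 -> P t0 ->
  (forall t, T t -> t0 <= t -> t < fjump T t -> P t -> P (fjump T t)) ->
  (forall t, T t -> t0 <= t -> fjump T t = t -> P t ->
     exists del, 0 < del /\ forall s, T s -> t < s < t + del -> P s) ->
  (forall t, T t -> t0 < t -> (forall s, T s -> t0 <= s < t -> P s) ->
     (forall e, 0 < e -> exists s, T s /\ t - e < s < t) -> P t) ->
  forall t, T t -> t0 <= t -> P t.
Proof.
  intros t0 P Tt0 P0 HRS HRD HLD t1 Tt1 Ht1. apply NNPP; intro Hn.
  set (G := fun tau => t0 <= tau /\ forall s, T s -> t0 <= s <= tau -> P s).
  assert (HGb : forall tau, G tau -> tau < t1).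
  { intros tau [_ Hg]. destruct (Rlt_le_dec tau t1); auto. exfalso; apply Hn; apply Hg; auto; lra. }
  assert (G t0) by (split; [lra|]; intros s _ Hs; replace s with t0 by lra; auto).
  destruct (completeness G) as [ts [Hub Hlub]].
  { exists t1; intros x Hx; left; auto. }
  { eauto. }
  assert (Hts0 : t0 <= ts) by (apply Hub; auto).
  assert (HA : forall s, T s -> t0 <= s < ts -> P s).
  { intros s Ts Hs. apply NNPP; intro Hns.
    assert (ts <= s).
    { apply Hlub. intros tau [Ht Hg]. destruct (Rle_lt_dec tau s); auto.
      exfalso; apply Hns; apply Hg; auto; lra. }
    lra. }
  assert (HB : T ts -> P ts -> False).
  { intros Tts Pts. destruct (Req_dec (fjump T ts) ts) as [E|NE].
    - destruct (HRD ts Tts Hts0 E Pts) as [del [Hdel Hd]].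
      assert (G (ts + del / 2)).
      { split; [lra|]. intros s Ts Hs.
        destruct (Rtotal_order s ts) as [Hl|[He|Hg]].
        + apply HA; auto; lra.
        + subst; auto.
        + apply Hd; auto; lra. }
      specialize (Hub _ H0). lra.
    - pose proof (fj_ge ts). assert (Hlt : ts < fjump T ts) by lra.
      assert (Pf := HRS ts Tts Hts0 Hlt Pts).
      assert (G (fjump T ts)).
      { split; [lra|]. intros s Ts Hs.
        destruct (Rtotal_order s ts) as [Hl|[He|Hg]].
        + apply HA; auto; lra.
        + subst; auto.
        + pose proof (fj_le ts s Ts Hg). replace s with (fjump T ts) by lra; auto. }
      specialize (Hub _ H1). lra. }
  destruct (classic (T ts)) as [Tts|NTts].
  - apply (HB Tts).
    destruct (Req_dec ts t0) as [E|NE].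
    + subst; auto.
    + destruct (classic (forall e, 0 < e -> exists s, T s /\ ts - e < s < ts)) as [Hld|Hnld].
      * apply HLD; auto; lra.
      * apply not_all_ex_not in Hnld. destruct Hnld as [e He]. apply imply_to_and in He. destruct He as [He Hne].
        assert (Hgap : forall s, T s -> s < ts -> s <= ts - e).
        { intros s Ts Hs. destruct (Rle_lt_dec s (ts - e)); auto. exfalso; apply Hne; exists s; split; auto; lra. }
        set (F := fun s => T s /\ t0 <= s < ts).
        destruct (completeness F) as [rho [Hub2 Hlub2]].
        { exists ts; intros x [_ Hx]; lra. }
        { exists t0; split; auto; lra. }
        assert (Hrho0 : t0 <= rho) by (apply Hub2; split; auto; lra).
        assert (Hrho1 : rho <= ts - e) by (apply Hlub2; intros x [Tx Hx]; apply Hgap; auto; lra).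
        assert (Trho : T rho).
        { destruct HT as [_ Hc]. apply Hc. intros e' He'.
          apply NNPP; intro Hn2.
          assert (rho <= rho - e').
          { apply Hlub2. intros x Fx. destruct (Rle_lt_dec x (rho - e')); auto.
            exfalso; apply Hn2; exists x; split; [destruct Fx; auto|].
            specialize (Hub2 x Fx). rewrite Rabs_left1; lra. }
          lra. }
        assert (Prho : P rho) by (apply HA; auto; lra).
        assert (Hsig : fjump T rho = ts).
        { apply fj_unique. split.
          - intros r [Tr Hr]. destruct (Rlt_le_dec r ts); auto.
            assert (r <= rho) by (apply Hub2; split; auto; lra). lra.
          - intros s' Hs'. apply Hs'. split; auto; lra. }
        rewrite <- Hsig. apply HRS; auto; lra.
  - destruct HT as [_ Hc]. assert (~ (forall e, 0 < e -> exists y, T y /\ Rabs (y - ts) < e)) by (intro; apply NTts; auto).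
    apply not_all_ex_not in H0. destruct H0 as [e He]. apply imply_to_and in He. destruct He as [He Hne].
    assert (G (ts + e / 2)).
    { split; [lra|]. intros s Ts Hs. destruct (Rlt_le_dec s ts).
      + apply HA; auto; lra.
      + exfalso; apply Hne; exists s; split; auto; rewrite Rabs_right; lra. }
    specialize (Hub _ H0). lra.
Qed.

End FJ.


Lemma le_all_eps : forall x c, (forall e, 0 < e -> x <= e * c) -> 0 <= c -> x <= 0.
Proof.
  intros x c H Hc. apply le_epsilon. intros e He.
  destruct (Req_dec c 0). { subst. specialize (H 1 Rlt_0_1). lra. }
  assert (0 < c) by lra. specialize (H (e / c) (Rdiv_lt_0_compat _ _ He H1)).
  replace (e / c * c) with e in H by (field; lra). lra.
Qed.

Lemma cx_unique : forall T, is_time_scale T -> unbounded_above T ->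
  forall lam t0 d, T t0 -> cx_solution T lam t0 cx0 d -> forall t, T t -> t0 <= t -> d t = cx0.
Proof.
  intros T HT Hu lam t0 d Tt0 [Hd0 Hd] t Tt Htt.
  apply cxn_eq0. apply Rle_antisym; [|apply cxn_ge0].
  set (L := cxnorm lam + 1).
  assert (HL : 0 <= cxnorm lam) by apply cxn_ge0.
  set (E := fun s => exp (L * (s - t0))).
  assert (HE1 : forall s, t0 <= s -> 1 <= E s).
  { intros s Hs. unfold E. rewrite <- exp_0. destruct (Req_dec (L * (s - t0)) 0) as [Z|Z]; [rewrite Z; lra|].
    left; apply exp_increasing. assert (0 <= L * (s - t0)) by (apply Rmult_le_pos; unfold L; lra). lra. }
  assert (HEstep : forall s h, 0 <= h -> E s * (1 + L * h) <= E (s + h)).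
  { intros s h Hh. unfold E. replace (L * (s + h - t0)) with (L * (s - t0) + L * h) by ring.
    rewrite exp_plus. apply Rmult_le_compat_l; [left; apply exp_pos|]. apply exp_ineq1_le. }
  assert (HEmono : forall s u, s <= u -> E s <= E u).
  { intros s u Hsu. unfold E. destruct (Req_dec s u); [subst; lra|]. left; apply exp_increasing.
    unfold L. apply Rmult_lt_compat_l; lra. }
  cut (forall e, 0 < e -> cxnorm (d t) <= e * (E t - 1)).
  { intro H. apply (le_all_eps _ (E t - 1)); auto. pose proof (HE1 t Htt); lra. }
  intros e He. revert t Tt Htt.
  apply (ts_ind T HT Hu t0 (fun s => cxnorm (d s) <= e * (E s - 1))); auto.
  - rewrite Hd0, cxn_0. pose proof (HE1 t0 (Rle_refl _)). nra.
  - intros t Tt Ht Hlt Pt. set (mu := fjump T t - t).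
    destruct (Hd t (conj Tt Ht)) as [_ Hder].
    set (res := cxsub (cxsub (d (fjump T t)) (d t)) (cxscal (fjump T t - t) (cxmul lam (d t)))).
    assert (Hres : cxnorm res <= 0).
    { apply (le_all_eps _ mu); [|unfold mu; lra]. intros eps Heps.
      destruct (Hder eps Heps) as [del [Hdel Hdd]].
      specialize (Hdd t (conj Tt Ht)). rewrite Rminus_diag, Rabs_R0 in Hdd. specialize (Hdd Hdel).
      unfold mu. rewrite Rabs_right in Hdd; [|lra]. apply Hdd. }
    assert (Eq : d (fjump T t) = cxadd (cxadd res (d t)) (cxscal mu (cxmul lam (d t)))).
    { unfold res, mu. destruct (d (fjump T t)), (d t), lam. apply cx_eq; simpl; ring. }
    rewrite Eq. eapply Rle_trans; [apply cxn_tri|]. eapply Rle_trans; [apply Rplus_le_compat_r; apply cxn_tri|].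
    rewrite cxn_scal, cxn_mul, Rabs_right by (unfold mu; lra).
    pose proof (HEstep t mu). replace (t + mu) with (fjump T t) in H by (unfold mu; ring).
    assert (0 <= mu) by (unfold mu; lra). specialize (H H0). pose proof (HE1 t Ht).
    assert (0 <= cxnorm (d t)) by apply cxn_ge0.
    assert (cxnorm (d t) * (1 + mu * cxnorm lam) <= e * (E t - 1) * (1 + mu * cxnorm lam))
      by (apply Rmult_le_compat_r; [nra|auto]).
    assert ((E t - 1) * (1 + mu * cxnorm lam) <= E (fjump T t) - 1) by (unfold L in H; nra).
    assert (e * ((E t - 1) * (1 + mu * cxnorm lam)) <= e * (E (fjump T t) - 1)) by (apply Rmult_le_compat_l; lra).
    nra.
  - intros t Tt Ht Hrd Pt. destruct (Hd t (conj Tt Ht)) as [_ Hder].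
    destruct (Hder e He) as [del [Hdel Hdd]]. exists del; split; auto.
    intros s Ts Hs. assert (Hds : dom T t0 s) by (split; [auto|lra]). specialize (Hdd s Hds). rewrite Hrd in Hdd.
    rewrite (Rabs_right (s - t)) in Hdd by lra. rewrite (Rabs_left (t - s)) in Hdd by lra.
    specialize (Hdd ltac:(lra)).
    set (res := cxsub (cxsub (d t) (d s)) (cxscal (t - s) (cxmul lam (d t)))) in *.
    assert (Eq : d s = cxsub (cxsub (d t) (cxscal (t - s) (cxmul lam (d t)))) res).
    { unfold res. destruct (d s), (d t), lam. apply cx_eq; simpl; ring. }
    rewrite Eq. eapply Rle_trans; [apply cxn_sub_tri|]. eapply Rle_trans; [apply Rplus_le_compat_r; apply cxn_sub_tri|].
    rewrite cxn_scal, cxn_mul, Rabs_left by lra.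
    set (h := s - t). pose proof (HEstep t h). replace (t + h) with s in H by (unfold h; ring).
    assert (0 <= h) by (unfold h; lra). specialize (H H0). pose proof (HE1 t Ht).
    assert (0 <= cxnorm (d t)) by apply cxn_ge0.
    replace (- (t - s)) with h in * by (unfold h; ring).
    assert (cxnorm (d t) * (1 + h * cxnorm lam) <= e * (E t - 1) * (1 + h * cxnorm lam))
      by (apply Rmult_le_compat_r; [nra|auto]).
    assert ((E t - 1) * (1 + h * cxnorm lam) + h <= E s - 1) by (unfold L in H; nra).
    assert (e * ((E t - 1) * (1 + h * cxnorm lam) + h) <= e * (E s - 1)) by (apply Rmult_le_compat_l; lra).
    nra.
  - intros t Tt Ht Hbef Hld. apply le_epsilon. intros eta Heta.
    assert (Hdt : dom T t0 t) by (split; [auto|lra]). destruct (Hd t Hdt) as [Hc _].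
    destruct (Hc eta Heta) as [del [Hdel Hcc]].
    destruct (Hld (Rmin del (t - t0)) ltac:(apply Rmin_pos; lra)) as [s [Ts Hs]].
    pose proof (Rmin_l del (t - t0)). pose proof (Rmin_r del (t - t0)).
    assert (Hds : dom T t0 s) by (split; [auto|lra]). specialize (Hcc s Hds). rewrite Rabs_left in Hcc by lra. specialize (Hcc ltac:(lra)).
    specialize (Hbef s Ts ltac:(lra)).
    assert (d t = cxsub (d s) (cxsub (d s) (d t))) by (destruct (d s), (d t); apply cx_eq; simpl; ring).
    rewrite H1. eapply Rle_trans; [apply cxn_sub_tri|].
    pose proof (HEmono s t ltac:(lra)). nra.
Qed.


Lemma ex_RInt_01 : forall (f : R -> R) a b, a <= b ->
  (forall x, f x = 0 \/ f x = 1) -> (forall x y, x <= y -> f x <= f y) -> ex_RInt f a b.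
Proof.
  intros f a b Hab H01 Hm.
  set (Z := fun x => x <= b /\ (x <= a \/ f x = 0)).
  destruct (completeness Z) as [c [Hub Hlub]].
  { exists b; intros x [Hx _]; auto. }
  { exists a; split; [auto|left; lra]. }
  assert (Hac : a <= c) by (apply Hub; split; [auto|left; lra]).
  assert (Hcb : c <= b) by (apply Hlub; intros x [Hx _]; auto).
  apply ex_RInt_Chasles with c.
  - apply ex_RInt_ext with (fun _ => 0); [|apply ex_RInt_const].
    intros x Hx. rewrite Rmin_left in Hx by lra. rewrite Rmax_right in Hx by lra.
    apply NNPP; intro Hn. assert (c <= x).
    { apply Hlub. intros y [Hy1 Hy2]. destruct (Rle_lt_dec y x); auto.
      destruct Hy2 as [Hy2|Hy2]; [lra|]. pose proof (Hm x y ltac:(lra)). destruct (H01 x); [congruence|lra]. }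
    lra.
  - apply ex_RInt_ext with (fun _ => 1); [|apply ex_RInt_const].
    intros x Hx. rewrite Rmin_left in Hx by lra. rewrite Rmax_right in Hx by lra.
    destruct (H01 x) as [E|E]; auto. exfalso.
    assert (Z x) by (split; [lra|right; auto]). specialize (Hub x H). lra.
Qed.

Fixpoint cnt (d y : R) (N : nat) : R :=
  match N with O => 0 | S N' => cnt d y N' + (if Rle_dec (INR N * d) y then 1 else 0) end.

Lemma cnt_S : forall d y N, cnt d y (S N) = cnt d y N + (if Rle_dec (INR (S N) * d) y then 1 else 0).
Proof. reflexivity. Qed.

Lemma cnt_prop : forall d y N, 0 < d -> 0 <= y ->
  cnt d y N * d <= y /\ (cnt d y N = INR N \/ y < (cnt d y N + 1) * d) /\ 0 <= cnt d y N <= INR N.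
Proof.
  intros d y N Hd Hy. induction N.
  - simpl. split; [lra|]. split; [left; auto|lra].
  - destruct IHN as [H1 [H2 H3]]. rewrite cnt_S.
    destruct (Rle_dec (INR (S N) * d) y) as [Hle|Hgt]; rewrite S_INR in *.
    + assert (cnt d y N = INR N).
      { destruct H2 as [H2|H2]; auto. exfalso.
        assert ((INR N + 1) * d < (cnt d y N + 1) * d) by lra.
        apply Rmult_lt_reg_r in H; lra. }
      rewrite H. split; [nra|]. split; [left; auto|]. pose proof (pos_INR N); lra.
    + rewrite Rplus_0_r. split; auto. split; [|lra].
      destruct H2 as [H2|H2]; right; [rewrite H2; lra|auto].
Qed.

Lemma ex_RInt_mono : forall (g : R -> R) a b, a <= b ->
  (forall x y, a <= x -> x <= y -> y <= b -> g x <= g y) -> ex_RInt g a b.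
Proof.
  intros g a b Hab Hm.
  set (cl := fun x => Rmax a (Rmin b x)).
  assert (Hcl : forall x, a <= cl x <= b).
  { intro x. unfold cl. split; [apply Rmax_l|]. apply Rmax_lub; [lra|apply Rmin_l]. }
  assert (Hclm : forall x y, x <= y -> cl x <= cl y).
  { intros x y Hxy. unfold cl. apply Rle_max_compat_l. apply Rle_min_compat_l. auto. }
  set (G := fun x => g (cl x)).
  assert (HGm : forall x y, x <= y -> G x <= G y).
  { intros x y Hxy. unfold G. pose proof (Hcl x); pose proof (Hcl y). apply Hm; try lra. apply Hclm; auto. }
  assert (HGb : forall x, g a <= G x <= g b).
  { intro x. unfold G. pose proof (Hcl x). split; apply Hm; lra. }
  set (D := g b - g a + 1).
  assert (HD : 0 < D) by (unfold D; pose proof (Hm a b ltac:(lra) Hab ltac:(lra)); lra).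
  set (del := fun N : nat => D / INR (S N)).
  assert (Hdel : forall N, 0 < del N).
  { intro N. unfold del. apply Rdiv_lt_0_compat; auto. apply lt_0_INR; lia. }
  set (f := fun (N : nat) x => g a + del N * cnt (del N) (G x - g a) (S N)).
  assert (Hcnt_int : forall N M, ex_RInt (fun x => cnt (del N) (G x - g a) M) a b).
  { intros N M. induction M.
    - simpl. apply ex_RInt_const.
    - apply ex_RInt_ext with (fun x => (cnt (del N) (G x - g a) M) +
          ((fun x => if Rle_dec (INR (S M) * del N) (G x - g a) then 1 else 0) x)).
      + intros; rewrite cnt_S; reflexivity.
      + apply (ex_RInt_plus (V := R_NormedModule)); auto. apply ex_RInt_01; auto.
        * intro x. destruct (Rle_dec _ _); auto.
        * intros x y Hxy. pose proof (HGm x y Hxy).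
          destruct (Rle_dec (INR (S M) * del N) (G x - g a)); destruct (Rle_dec (INR (S M) * del N) (G y - g a)); lra. }
  assert (Hfint : forall N, is_RInt (f N) a b (RInt (f N) a b)).
  { intro N. apply (RInt_correct (V := R_CompleteNormedModule)). unfold f.
    apply (ex_RInt_plus (V := R_NormedModule) (fun _ => g a)); [apply ex_RInt_const|].
    apply (ex_RInt_scal (V := R_NormedModule) (fun x => cnt (del N) (G x - g a) (S N))). auto. }
  assert (Hunif : forall N x, Rabs (f N x - G x) < del N).
  { intros N x. unfold f. pose proof (HGb x).
    destruct (cnt_prop (del N) (G x - g a) (S N) (Hdel N) ltac:(lra)) as [H1 [H2 H3]].
    assert (G x - g a < INR (S N) * del N).
    { unfold del. field_simplify; [unfold D; lra|]. apply not_0_INR; lia. }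
    assert (G x - g a < (cnt (del N) (G x - g a) (S N) + 1) * del N).
    { destruct H2 as [H2|H2]; auto. rewrite H2. pose proof (Hdel N). lra. }
    rewrite Rabs_left1; lra. }
  destruct (filterlim_RInt (V := R_CompleteNormedModule) f a b eventually _ G (fun N => RInt (f N) a b) Hfint) as [If [_ HIf]].
  - intros P [eps HP]. destruct (archimed (D / eps)) as [Hup _].
    assert (0 <= up (D / eps))%Z.
    { apply le_IZR. assert (0 < D / eps) by (apply Rdiv_lt_0_compat; [auto|apply cond_pos]). lra. }
    exists (Z.to_nat (up (D / eps))). intros N HN. apply HP.
    intro x. change (Rabs (f N x - G x) < eps).
    eapply Rlt_le_trans; [apply Hunif|]. unfold del.
    assert (Hpos := cond_pos eps).
    assert (D / eps < INR (S N)).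
    { rewrite S_INR. apply le_INR in HN. rewrite INR_IZR_INZ, Z2Nat.id in HN by auto. lra. }
    apply Rmult_lt_compat_r with (r := eps) in H0; auto.
    replace (D / eps * eps) with D in H0 by (field; lra).
    apply Rle_div_l; [apply lt_0_INR; lia|]. lra.
  - apply ex_RInt_ext with G.
    + intros x Hx. rewrite Rmin_left in Hx by lra. rewrite Rmax_right in Hx by lra.
      unfold G, cl. rewrite Rmin_right by lra. rewrite Rmax_right by lra. auto.
    + exists If; auto.
Qed.


Definition phi (T : R -> Prop) (t0 r : R) : R :=
  epsilon (inhabits 0) (fun m => is_lub (fun s => T s /\ t0 <= s /\ s <= Rmax t0 r) m).

Fixpoint hh (T : R -> Prop) (t0 : R) (k : nat) (r : R) : R :=
  match k with O => 1 | S j => RInt (fun u => hh T t0 j (phi T t0 u)) t0 r end.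

Definition pp (t0 : R) (k : nat) (x : R) : R := (x - t0) ^ k / INR (Factorial.fact k).

Section HH.
Variable T : R -> Prop.
Variable t0 : R.
Hypothesis Tt0 : T t0.
Hypothesis Hu : unbounded_above T.

Lemma phi_lub : forall r, is_lub (fun s => T s /\ t0 <= s /\ s <= Rmax t0 r) (phi T t0 r).
Proof.
  intro r. unfold phi. apply epsilon_spec. destruct (completeness (fun s => T s /\ t0 <= s /\ s <= Rmax t0 r)) as [m Hm].
  - exists (Rmax t0 r). intros x [_ [_ H]]; auto.
  - exists t0. split; auto. split; [lra|apply Rmax_l].
  - exists m; auto.
Qed.

Lemma phi_ge : forall r s, T s -> t0 <= s -> s <= r -> s <= phi T t0 r.
Proof. intros r s Ts H1 H2. destruct (phi_lub r) as [H _]. apply H. split; auto. split; auto.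
  eapply Rle_trans; [apply H2|apply Rmax_r]. Qed.

Lemma phi_t0 : forall r, t0 <= phi T t0 r.
Proof. intro r. destruct (phi_lub r) as [H _]. apply H. split; auto. split; [lra|apply Rmax_l]. Qed.

Lemma phi_le : forall r, phi T t0 r <= Rmax t0 r.
Proof. intro r. destruct (phi_lub r) as [_ H]. apply H. intros x [_ [_ Hx]]; auto. Qed.

Lemma phi_mono : forall x y, x <= y -> phi T t0 x <= phi T t0 y.
Proof.
  intros x y Hxy. destruct (phi_lub x) as [_ H]. apply H. intros s [Ts [Hs1 Hs2]].
  destruct (phi_lub y) as [H' _]. apply H'. split; auto. split; auto.
  eapply Rle_trans; [apply Hs2|]. apply Rle_max_compat_l; auto.
Qed.

Lemma phi_gap : forall t r, T t -> t0 <= t -> t <= r -> r < fjump T t -> phi T t0 r = t.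
Proof.
  intros t r Tt H1 H2 H3. apply Rle_antisym; [|apply phi_ge; auto].
  destruct (phi_lub r) as [_ H]. apply H. intros s [Ts [Hs1 Hs2]].
  rewrite Rmax_right in Hs2 by lra.
  destruct (Rle_lt_dec s t); auto.
  pose proof (fj_le T Hu t s Ts r0). lra.
Qed.

Lemma hh_int_aux : forall k, (forall x y, t0 <= x -> x <= y -> hh T t0 k x <= hh T t0 k y) ->
  forall a b, a <= b -> ex_RInt (fun u => hh T t0 k (phi T t0 u)) a b.
Proof.
  intros k Hm a b Hab. apply ex_RInt_mono; auto. intros x y _ Hxy _.
  apply Hm; [apply phi_t0|apply phi_mono; auto].
Qed.

Lemma hh_mono_nonneg : forall k,
  (forall x y, t0 <= x -> x <= y -> hh T t0 k x <= hh T t0 k y) /\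
  (forall x, t0 <= x -> 0 <= hh T t0 k x).
Proof.
  induction k as [|k [IHm IHn0]].
  - simpl. split; intros; lra.
  - assert (Hint := hh_int_aux k IHm).
    assert (Hnn : forall x, t0 <= x -> 0 <= hh T t0 (S k) x).
    { intros x Hx. simpl. apply RInt_ge_0; auto. intros u Hu0. apply IHn0. apply phi_t0. }
    split; auto.
    intros x y Hx Hxy. simpl.
    rewrite <- (RInt_Chasles (V := R_CompleteNormedModule) _ t0 x y) by (apply Hint; lra).
    change (RInt (fun u => hh T t0 k (phi T t0 u)) t0 x <= RInt (fun u => hh T t0 k (phi T t0 u)) t0 x + RInt (fun u => hh T t0 k (phi T t0 u)) x y).
    assert (0 <= RInt (fun u => hh T t0 k (phi T t0 u)) x y).
    { apply RInt_ge_0; auto. intros u Hu0. apply IHn0. apply phi_t0. }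
    lra.
Qed.

Lemma hh_mono : forall k x y, t0 <= x -> x <= y -> hh T t0 k x <= hh T t0 k y.
Proof. intro k. apply (hh_mono_nonneg k). Qed.
Lemma hh_nonneg : forall k x, t0 <= x -> 0 <= hh T t0 k x.
Proof. intro k. apply (hh_mono_nonneg k). Qed.
Lemma hh_int : forall k a b, ex_RInt (fun u => hh T t0 k (phi T t0 u)) a b.
Proof.
  intros k a b. destruct (Rle_lt_dec a b).
  - apply hh_int_aux; auto. apply hh_mono.
  - apply ex_RInt_swap. apply hh_int_aux; [apply hh_mono|lra].
Qed.

Lemma hh_diff : forall k a b, hh T t0 (S k) b - hh T t0 (S k) a = RInt (fun u => hh T t0 k (phi T t0 u)) a b.
Proof.
  intros k a b. simpl.
  rewrite <- (RInt_Chasles (V := R_CompleteNormedModule) _ t0 a b) by apply hh_int.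
  change (RInt (fun u => hh T t0 k (phi T t0 u)) t0 a + RInt (fun u => hh T t0 k (phi T t0 u)) a b
     - RInt (fun u => hh T t0 k (phi T t0 u)) t0 a = RInt (fun u => hh T t0 k (phi T t0 u)) a b). ring.
Qed.

Lemma hh_t0 : forall k, hh T t0 k t0 = match k with O => 1 | S _ => 0 end.
Proof. intros [|k]; simpl; auto. apply (RInt_point (V := R_CompleteNormedModule)). Qed.

Lemma pp_deriv : forall k u, is_derive (pp t0 (S k)) u (pp t0 k u).
Proof.
  intros k u. unfold pp. auto_derive; auto.
  change (match k with 0%nat => 1 | S _ => INR k + 1 end) with (INR (S k)).
  replace (Factorial.fact k + k * Factorial.fact k)%nat with (S k * Factorial.fact k)%nat by (simpl; lia).
  rewrite mult_INR. pose proof (INR_fact_neq_0 k). assert (INR (S k) <> 0) by (apply not_0_INR; lia).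
  replace (u + - t0) with (u - t0) by ring. field; auto.
Qed.

Lemma pp_int : forall k a b, RInt (pp t0 k) a b = pp t0 (S k) b - pp t0 (S k) a.
Proof.
  intros k a b. apply (is_RInt_unique (V := R_CompleteNormedModule)).
  apply (is_RInt_derive (V := R_CompleteNormedModule) (pp t0 (S k))).
  - intros; apply pp_deriv.
  - intros x _. apply (ex_derive_continuous (V := R_NormedModule)). unfold pp. auto_derive. auto.
Qed.

Lemma pp_nonneg : forall k x, t0 <= x -> 0 <= pp t0 k x.
Proof. intros. unfold pp. apply Rdiv_le_0_compat; [apply pow_le; lra|apply INR_fact_lt_0]. Qed.

Lemma hh_bound : forall k x, t0 <= x -> hh T t0 k x <= pp t0 k x.
Proof.
  induction k; intros x Hx.
  - simpl. unfold pp. simpl. lra.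
  - simpl. replace (pp t0 (S k) x) with (RInt (pp t0 k) t0 x).
    2:{ rewrite pp_int. unfold pp. simpl. rewrite Rminus_diag. rewrite Rmult_0_l. unfold Rdiv; ring. }
    apply RInt_le; auto.
    + apply hh_int.
    + apply (ex_RInt_continuous (V := R_CompleteNormedModule)). intros z _.
      apply (ex_derive_continuous (V := R_NormedModule)). unfold pp. auto_derive. auto.
    + intros u Hu0. eapply Rle_trans; [|apply IHk; lra].
      apply hh_mono; [apply phi_t0|]. eapply Rle_trans; [apply phi_le|]. rewrite Rmax_right; lra.
Qed.

Definition LL (k : nat) (B : R) : R := match k with O => 0 | S j => pp t0 j B end.

Lemma hh_lip : forall k x y B, t0 <= x -> t0 <= y -> x <= B -> y <= B ->
  Rabs (hh T t0 k x - hh T t0 k y) <= LL k B * Rabs (x - y).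
Proof.
  intros k x y B Hx Hy HxB HyB. destruct k.
  - simpl. rewrite Rminus_diag, Rabs_R0. lra.
  - simpl LL.
    assert (forall a b, t0 <= a -> a <= b -> b <= B -> 0 <= hh T t0 (S k) b - hh T t0 (S k) a <= pp t0 k B * (b - a)).
    { intros a b Ha Hab HbB. rewrite hh_diff. split.
      - apply RInt_ge_0; auto. apply hh_int. intros. apply hh_nonneg, phi_t0.
      - replace (pp t0 k B * (b - a)) with (RInt (fun _ => pp t0 k B) a b).
        2:{ rewrite (RInt_const (V := R_CompleteNormedModule)). simpl. unfold scal; simpl. unfold mult; simpl. ring. }
        apply RInt_le; auto. apply hh_int. apply ex_RInt_const.
        intros u Hu0. eapply Rle_trans; [|apply hh_bound; lra].
        apply hh_mono; [apply phi_t0|]. eapply Rle_trans; [apply phi_le|]. rewrite Rmax_right; lra. }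
    destruct (Rle_lt_dec x y).
    + rewrite Rabs_minus_sym, (Rabs_minus_sym x). rewrite !Rabs_right; [|lra|]. apply H; lra.
      specialize (H x y Hx r HyB). lra.
    + rewrite !Rabs_right; [|lra|]. apply H; lra. specialize (H y x Hy ltac:(lra) HxB). lra.
Qed.

Lemma hh_key : forall k a b c M, t0 <= a -> t0 <= b ->
  (forall u, Rmin a b < u < Rmax a b -> Rabs (hh T t0 k (phi T t0 u) - c) <= M) ->
  Rabs (hh T t0 (S k) b - hh T t0 (S k) a - (b - a) * c) <= Rabs (b - a) * M.
Proof.
  assert (Hle : forall k a b c M, a <= b ->
    (forall u, a < u < b -> Rabs (hh T t0 k (phi T t0 u) - c) <= M) ->
    Rabs (hh T t0 (S k) b - hh T t0 (S k) a - (b - a) * c) <= (b - a) * M).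
  { intros k a b c M Hab HM. rewrite hh_diff.
    replace ((b - a) * c) with (RInt (fun _ => c) a b)
      by (rewrite (RInt_const (V := R_CompleteNormedModule)); simpl; unfold scal; simpl; unfold mult; simpl; ring).
    replace (RInt (fun u => hh T t0 k (phi T t0 u)) a b - RInt (fun _ => c) a b)
      with (RInt (fun u => hh T t0 k (phi T t0 u) - c) a b).
    2:{ rewrite (RInt_minus (V := R_CompleteNormedModule)); [|apply hh_int|apply ex_RInt_const]. reflexivity. }
    assert (Hi : ex_RInt (fun u => hh T t0 k (phi T t0 u) - c) a b).
    { apply (ex_RInt_minus (V := R_NormedModule)); [apply hh_int|apply ex_RInt_const]. }
    replace ((b - a) * M) with (RInt (fun _ => M) a b)
      by (rewrite (RInt_const (V := R_CompleteNormedModule)); simpl; unfold scal; simpl; unfold mult; simpl; ring).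
    apply Rabs_le. split.
    - replace (- RInt (fun _ => M) a b) with (RInt (fun _ => - M) a b).
      2:{ rewrite !(RInt_const (V := R_CompleteNormedModule)). simpl; unfold scal; simpl; unfold mult; simpl; ring. }
      apply RInt_le; auto. apply ex_RInt_const. intros u Hu0. specialize (HM u Hu0). apply Rabs_le_between in HM. lra.
    - apply RInt_le; auto. apply ex_RInt_const. intros u Hu0. specialize (HM u Hu0). apply Rabs_le_between in HM. lra. }
  intros k a b c M Ha Hb HM. destruct (Rle_lt_dec a b).
  - rewrite (Rabs_right (b - a)) by lra. apply Hle; auto. intros u Hu0. apply HM. rewrite Rmin_left, Rmax_right; lra.
  - rewrite (Rabs_left (b - a)) by lra.
    replace (hh T t0 (S k) b - hh T t0 (S k) a - (b - a) * c) with (- (hh T t0 (S k) a - hh T t0 (S k) b - (a - b) * c)) by ring.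
    rewrite Rabs_Ropp. replace (- (b - a)) with (a - b) by ring. apply Hle; [lra|].
    intros u Hu0. apply HM. rewrite Rmin_right, Rmax_left; lra.
Qed.

End HH.


Lemma ex_exp : forall x, ex_series (fun k => x ^ k / INR (Factorial.fact k)).
Proof.
  intro x. exists (exp x). pose proof (is_exp_Reals x). unfold is_pseries in H.
  eapply is_series_ext; [|apply H]. intro k. simpl. unfold scal; simpl; unfold mult; simpl. unfold Rdiv. rewrite pow_n_pow. reflexivity.
Qed.

Lemma is_series_zero : is_series (fun _ : nat => 0) 0.
Proof.
  unfold is_series. apply (filterlim_ext (fun _ => 0)).
  - intro n. rewrite sum_n_const. simpl. unfold scal; simpl; unfold mult; simpl; ring.
  - apply filterlim_const.
Qed.

Lemma ex_series_dom : forall a b, (forall k, Rabs (a k) <= b k) -> ex_series b ->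
  ex_series a /\ Rabs (Series a) <= Series b.
Proof.
  intros a b H Hb.
  assert (Ha : ex_series (fun k => Rabs (a k))).
  { apply (ex_series_le (K := R_AbsRing) (V := R_CompleteNormedModule)) with b; auto.
    intro k. change (Rabs (Rabs (a k)) <= b k). rewrite Rabs_Rabsolu; auto. }
  split.
  - apply ex_series_Rabs; auto.
  - eapply Rle_trans; [apply Series_Rabs; auto|]. apply Series_le; auto. intro k; split; [apply Rabs_pos|auto].
Qed.

Lemma rsum_series : forall n (a : nat -> nat -> R), (forall j, (j < n)%nat -> ex_series (a j)) ->
  ex_series (fun k => rsum n (fun j => a j k)) /\
  rsum n (fun j => Series (a j)) = Series (fun k => rsum n (fun j => a j k)).
Proof.
  induction n; intros a H.
  - simpl. split.
    + exists 0. apply is_series_zero.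
    + symmetry. apply is_series_unique. apply is_series_zero.
  - destruct (IHn a) as [H1 H2]; [intros; apply H; lia|]. simpl. rewrite H2.
    assert (ex_series (a n)) by (apply H; lia).
    split.
    + apply (ex_series_plus (K := R_AbsRing) (V := R_NormedModule)); auto.
    + rewrite <- Series_plus; auto.
Qed.

Lemma rsum_const : forall n c, rsum n (fun _ => c) = INR n * c.
Proof. induction n; intros; simpl rsum; [simpl; ring|]. rewrite IHn, S_INR; ring. Qed.

Lemma sumsq_le : forall n (v : vec), rsum n (fun i => v i ^ 2) <= (rsum n (fun i => Rabs (v i))) ^ 2.
Proof.
  induction n; intros; simpl; [lra|]. specialize (IHn v).
  assert (0 <= rsum n (fun i => Rabs (v i))) by (apply rsum_nonneg; intros; apply Rabs_pos).
  pose proof (Rabs_pos (v n)). simpl in *. assert (v n * (v n * 1) = Rabs (v n) * Rabs (v n)) by (rewrite <- Rabs_mult; rewrite Rabs_right; [ring|nra]). nra.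
Qed.

Definition l1 (n : nat) (v : vec) : R := rsum n (fun i => Rabs (v i)).

Lemma vnorm_l1 : forall n v, vnorm n v <= l1 n v.
Proof.
  intros. unfold vnorm, l1. rewrite <- (sqrt_pow2 (rsum n (fun i => Rabs (v i)))).
  - apply sqrt_le_1_alt. apply sumsq_le.
  - apply rsum_nonneg; intros; apply Rabs_pos.
Qed.

Lemma l1_bound : forall n v c, (forall i, (i < n)%nat -> Rabs (v i) <= c) -> l1 n v <= INR n * c.
Proof. intros. unfold l1. rewrite <- rsum_const. apply rsum_le; auto. Qed.

Lemma comp_l1 : forall n v i, (i < n)%nat -> Rabs (v i) <= l1 n v.
Proof. intros. unfold l1. apply (rsum_term_le n (fun i => Rabs (v i))); auto. intros; apply Rabs_pos. Qed.

Fixpoint Mpow (n : nat) (M : nat -> nat -> R) (k : nat) (x0 : vec) : vec :=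
  match k with O => x0 | S j => mat_vec n M (Mpow n M j x0) end.

Definition CM (n : nat) (M : nat -> nat -> R) : R := rsum n (fun i => rsum n (fun j => Rabs (M i j))).

Lemma CM_nonneg : forall n M, 0 <= CM n M.
Proof. intros. unfold CM. apply rsum_nonneg; intros; apply rsum_nonneg; intros; apply Rabs_pos. Qed.

Lemma l1_mat : forall n M v, l1 n (mat_vec n M v) <= CM n M * l1 n v.
Proof.
  intros. unfold l1, CM, mat_vec. rewrite Rmult_comm, <- rsum_scal. apply rsum_le. intros i Hi.
  eapply Rle_trans; [apply rsum_abs|]. rewrite <- rsum_scal. apply rsum_le. intros j Hj.
  rewrite Rabs_mult. pose proof (comp_l1 n v j Hj). unfold l1 in H. pose proof (Rabs_pos (M i j)). nra.
Qed.

Lemma Mpow_bound : forall n M x0 k i, (i < n)%nat -> Rabs (Mpow n M k x0 i) <= CM n M ^ k * l1 n x0.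
Proof.
  intros. eapply Rle_trans; [apply comp_l1; eauto|]. induction k; simpl; [lra|].
  eapply Rle_trans; [apply l1_mat|]. rewrite Rmult_assoc. apply Rmult_le_compat_l; [apply CM_nonneg|auto].
Qed.

Definition Xs (T : R -> Prop) (t0 : R) (n : nat) (M : nat -> nat -> R) (x0 : vec) (t : R) : vec :=
  fun i => Series (fun k => hh T t0 k t * Mpow n M k x0 i).

Section SOL.
Variable T : R -> Prop.
Variable t0 : R.
Hypothesis Tt0 : T t0.
Hypothesis Hu : unbounded_above T.
Variable n : nat.
Variable M : nat -> nat -> R.
Variable x0 : vec.

Let C := CM n M.
Let c0 := l1 n x0.
Let X := Xs T t0 n M x0.

Lemma c0_nonneg : 0 <= c0.
Proof. unfold c0, l1. apply rsum_nonneg; intros; apply Rabs_pos. Qed.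

Lemma ex_Ssum : forall B, ex_series (fun k => pp t0 k B * C ^ k).
Proof.
  intro B. destruct (ex_exp (C * (B - t0))) as [l Hl]. exists l. eapply is_series_ext; [|apply Hl].
  intro k. simpl. unfold pp. rewrite Rpow_mult_distr. unfold Rdiv. ring.
Qed.

Lemma ex_Lsum : forall B, ex_series (fun k => LL t0 k B * C ^ k).
Proof.
  intro B. apply ex_series_incr_1. simpl LL.
  apply (ex_series_ext (fun k => scal C (pp t0 k B * C ^ k))).
  - intro k. simpl. unfold scal; simpl; unfold mult; simpl. ring.
  - apply (ex_series_scal_l (K := R_AbsRing) (V := R_NormedModule)). apply ex_Ssum.
Qed.

Definition Lsum (B : R) := Series (fun k => LL t0 k B * C ^ k).

Lemma Lsum_nonneg : forall B, t0 <= B -> 0 <= Lsum B.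
Proof.
  intros B HB. unfold Lsum. rewrite <- (is_series_unique (fun _ : nat => 0) 0 is_series_zero).
  apply Series_le; [|apply ex_Lsum]. intro k. split; [lra|]. apply Rmult_le_pos; [|apply pow_le, CM_nonneg].
  destruct k; simpl; [lra|]. apply pp_nonneg; auto.
Qed.

Lemma term_bound : forall k t B i, (i < n)%nat -> t0 <= t -> t <= B ->
  Rabs (hh T t0 k t * Mpow n M k x0 i) <= c0 * (pp t0 k B * C ^ k).
Proof.
  intros. rewrite Rabs_mult. pose proof (Mpow_bound n M x0 k i H). fold C c0 in H2.
  rewrite Rabs_right by (apply Rle_ge, hh_nonneg; auto).
  assert (hh T t0 k t <= pp t0 k B).
  { eapply Rle_trans; [apply hh_bound; auto|]. unfold pp. apply Rmult_le_compat_r.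
    - left; apply Rinv_0_lt_compat, INR_fact_lt_0.
    - apply pow_incr; lra. }
  pose proof (hh_nonneg T t0 Tt0 k t H0). pose proof (Rabs_pos (Mpow n M k x0 i)).
  assert (0 <= C ^ k) by (apply pow_le, CM_nonneg). pose proof c0_nonneg.
  apply Rle_trans with (pp t0 k B * (C ^ k * c0)); [|lra].
  apply Rmult_le_compat; auto.
Qed.

Lemma X_ex : forall t i, (i < n)%nat -> t0 <= t -> ex_series (fun k => hh T t0 k t * Mpow n M k x0 i).
Proof.
  intros t i Hi Ht. apply (ex_series_dom _ (fun k => c0 * (pp t0 k t * C ^ k))).
  - intro k. apply term_bound; auto; lra.
  - apply (ex_series_scal_l (K := R_AbsRing) (V := R_NormedModule) c0 (fun k => pp t0 k t * C ^ k)). apply ex_Ssum.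
Qed.

Lemma X_t0 : forall i, (i < n)%nat -> X t0 i = x0 i.
Proof.
  intros i Hi. unfold X, Xs. rewrite Series_incr_1 by (apply X_ex; auto; lra).
  rewrite hh_t0; auto.
  rewrite (Series_ext _ (fun _ => 0)).
  - rewrite (is_series_unique _ 0 is_series_zero). simpl. ring.
  - intro k. rewrite hh_t0; auto. ring.
Qed.

Lemma X_lip : forall s t B i, (i < n)%nat -> t0 <= s -> t0 <= t -> s <= B -> t <= B ->
  Rabs (X s i - X t i) <= Rabs (s - t) * c0 * Lsum B.
Proof.
  intros s t B i Hi Hs Ht HsB HtB. unfold X, Xs.
  rewrite <- Series_minus by (apply X_ex; auto).
  rewrite (Series_ext _ (fun k => (hh T t0 k s - hh T t0 k t) * Mpow n M k x0 i)) by (intro; ring).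
  unfold Lsum. rewrite Rmult_assoc, <- Series_scal_l, <- Series_scal_l.
  apply ex_series_dom.
  - intro k. rewrite Rabs_mult. pose proof (Mpow_bound n M x0 k i Hi). fold C c0 in H.
    pose proof (hh_lip T t0 Tt0 k s t B Hs Ht HsB HtB).
    assert (0 <= LL t0 k B) by (destruct k; simpl; [lra|apply pp_nonneg; lra]).
    assert (0 <= C ^ k) by (apply pow_le, CM_nonneg). pose proof c0_nonneg.
    pose proof (Rabs_pos (s - t)). pose proof (Rabs_pos (hh T t0 k s - hh T t0 k t)).
    pose proof (Rabs_pos (Mpow n M k x0 i)).
    apply Rle_trans with ((LL t0 k B * Rabs (s - t)) * (C ^ k * c0)).
    + apply Rmult_le_compat; auto.
    + nra.
  - apply (ex_series_scal_l (K := R_AbsRing) (V := R_NormedModule) (Rabs (s - t))).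
    apply (ex_series_scal_l (K := R_AbsRing) (V := R_NormedModule) c0). apply ex_Lsum.
Qed.
End SOL.


Lemma ex_series_Rminus : forall a b, ex_series a -> ex_series b -> ex_series (fun k => a k - b k).
Proof. intros. apply (ex_series_minus (K := R_AbsRing) (V := R_NormedModule)); auto. Qed.

Section SOL2.
Variable T : R -> Prop.
Variable t0 : R.
Hypothesis Tt0 : T t0.
Hypothesis Hu : unbounded_above T.
Variable n : nat.
Variable M : nat -> nat -> R.
Variable x0 : vec.

Let C := CM n M.
Let c0 := l1 n x0.
Let X := Xs T t0 n M x0.

Lemma MX_series : forall t i, t0 <= t ->
  ex_series (fun k => hh T t0 k t * Mpow n M (S k) x0 i) /\
  rsum n (fun j => M i j * X t j) = Series (fun k => hh T t0 k t * Mpow n M (S k) x0 i).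
Proof.
  intros t i Ht.
  assert (E : forall k, hh T t0 k t * Mpow n M (S k) x0 i = rsum n (fun j => M i j * (hh T t0 k t * Mpow n M k x0 j))).
  { intro k. simpl. unfold mat_vec. rewrite <- rsum_scal. apply rsum_ext. intros; ring. }
  destruct (rsum_series n (fun j k => M i j * (hh T t0 k t * Mpow n M k x0 j))) as [H1 H2].
  { intros j Hj. apply (ex_series_scal_l (K := R_AbsRing) (V := R_NormedModule) (M i j)). apply X_ex; auto. }
  split.
  - eapply ex_series_ext; [|apply H1]. intro k; simpl. rewrite E; auto.
  - rewrite (Series_ext _ (fun k => rsum n (fun j => M i j * (hh T t0 k t * Mpow n M k x0 j)))) by (intro; apply E).
    rewrite <- H2. apply rsum_ext. intros j Hj. unfold X, Xs. rewrite <- Series_scal_l. auto.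
Qed.

Lemma X_deriv_core : forall a b t B c i, (i < n)%nat -> t0 <= a -> t0 <= b -> t0 <= t ->
  a <= B -> b <= B -> t <= B -> 0 <= c ->
  (forall k u, Rmin a b < u < Rmax a b -> Rabs (hh T t0 k (phi T t0 u) - hh T t0 k t) <= LL t0 k B * c) ->
  Rabs (X b i - X a i - (b - a) * rsum n (fun j => M i j * X t j)) <= Rabs (b - a) * c * c0 * C * Lsum t0 n M B.
Proof.
  intros a b t B c i Hi Ha Hb Ht HaB HbB HtB Hc HK.
  destruct (MX_series t i Ht) as [Hex1 HMX]. rewrite HMX.
  unfold X, Xs. rewrite <- Series_minus by (apply X_ex; auto).
  rewrite (Series_ext _ (fun k => (hh T t0 k b - hh T t0 k a) * Mpow n M k x0 i)) by (intro; ring).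
  rewrite Series_incr_1.
  2:{ apply (ex_series_ext (K := R_AbsRing) (V := R_NormedModule) (fun k => (hh T t0 k b * Mpow n M k x0 i) - (hh T t0 k a * Mpow n M k x0 i))).
      - intro k. symmetry; apply Rmult_minus_distr_r.
      - apply ex_series_Rminus; apply X_ex; auto. }
  simpl hh at 1 2. rewrite Rminus_diag, Rmult_0_l, Rplus_0_l.
  rewrite <- Series_scal_l. rewrite <- Series_minus.
  3:{ apply (ex_series_scal_l (K := R_AbsRing) (V := R_NormedModule) (b - a)). auto. }
  2:{ apply (proj1 (ex_series_incr_1 (K := R_AbsRing) (V := R_NormedModule) (fun k => (hh T t0 k b - hh T t0 k a) * Mpow n M k x0 i))).
      apply (ex_series_ext (K := R_AbsRing) (V := R_NormedModule) (fun k => (hh T t0 k b * Mpow n M k x0 i) - (hh T t0 k a * Mpow n M k x0 i))).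
      - intro k. symmetry; apply Rmult_minus_distr_r.
      - apply ex_series_Rminus; apply X_ex; auto. }
  unfold Lsum. rewrite <- Series_scal_l.
  apply ex_series_dom.
  2:{ apply (ex_series_scal_l (K := R_AbsRing) (V := R_NormedModule)). apply ex_Lsum. }
  intro k.
  replace ((hh T t0 (S k) b - hh T t0 (S k) a) * Mpow n M (S k) x0 i - (b - a) * (hh T t0 k t * Mpow n M (S k) x0 i))
    with ((hh T t0 (S k) b - hh T t0 (S k) a - (b - a) * hh T t0 k t) * Mpow n M (S k) x0 i) by ring.
  rewrite Rabs_mult.
  pose proof (hh_key T t0 Tt0 k a b (hh T t0 k t) (LL t0 k B * c) Ha Hb (HK k)).
  pose proof (Mpow_bound n M x0 (S k) i Hi). fold C c0 in H0. simpl pow in H0.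
  assert (0 <= LL t0 k B) by (destruct k; simpl; [lra|apply pp_nonneg; lra]).
  assert (0 <= C ^ k) by (apply pow_le, CM_nonneg). assert (0 <= C) by apply CM_nonneg.
  pose proof (c0_nonneg n x0). fold c0 in H4.
  pose proof (Rabs_pos (b - a)). pose proof (Rabs_pos (Mpow n M (S k) x0 i)).
  pose proof (Rabs_pos (hh T t0 (S k) b - hh T t0 (S k) a - (b - a) * hh T t0 k t)).
  apply Rle_trans with ((Rabs (b - a) * (LL t0 k B * c)) * (C * C ^ k * c0)).
  - apply Rmult_le_compat; auto.
  - unfold C; right; ring.
Qed.
End SOL2.


Lemma small_mult : forall N c d eps, 0 <= N -> 0 <= c -> 0 < eps -> c < d -> d <= eps / (N + 1) -> N * c <= eps.
Proof.
  intros N c d eps HN Hc He Hcd Hd.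
  assert (c * (N + 1) <= eps).
  { apply Rle_trans with (d * (N + 1)); [apply Rmult_le_compat_r; lra|].
    apply Rmult_le_compat_r with (r := N + 1) in Hd; [|lra].
    replace (eps / (N + 1) * (N + 1)) with eps in Hd by (field; lra). lra. }
  nra.
Qed.

Lemma sol_exists : forall T t0 n M x0, T t0 -> unbounded_above T ->
  aut_solution T n M t0 x0 (Xs T t0 n M x0).
Proof.
  intros T t0 n M x0 Tt0 Hu. split.
  - intros i Hi. apply X_t0; auto.
  - intros t [Tt Ht]. pose proof (c0_nonneg n x0) as Hc0. pose proof (CM_nonneg n M) as HC.
    pose proof (pos_INR n) as Hn. split.
    + intros eps Heps. set (B := t + 1). set (K := l1 n x0 * Lsum t0 n M B).
      assert (HK : 0 <= K) by (unfold K; apply Rmult_le_pos; auto; apply Lsum_nonneg; unfold B; lra).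
      set (del := Rmin 1 (eps / (INR n * K + 1))).
      assert (Hdel : 0 < del) by (apply Rmin_pos; [lra|apply Rdiv_lt_0_compat; nra]).
      exists del. split; auto. intros s [Ts Hs] Hst.
      pose proof (Rmin_l 1 (eps / (INR n * K + 1))). pose proof (Rmin_r 1 (eps / (INR n * K + 1))).
      fold del in H, H0.
      assert (Habs := Rabs_pos (s - t)).
      assert (s <= B) by (unfold B; apply Rabs_lt_between' in Hst; lra).
      eapply Rle_lt_trans; [apply vnorm_l1|].
      eapply Rle_lt_trans; [apply (l1_bound n _ (Rabs (s - t) * K))|].
      * intros i Hi. unfold vsub. unfold K. rewrite <- Rmult_assoc. apply X_lip; auto. unfold B; lra.
      * assert (INR n * K * Rabs (s - t) <= eps).
        { apply (small_mult (INR n * K) (Rabs (s - t)) del); auto. apply Rmult_le_pos; auto. }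
        destruct (Req_dec (INR n * K) 0) as [Z|Z].
        -- replace (INR n * (Rabs (s - t) * K)) with (INR n * K * Rabs (s - t)) by ring. rewrite Z. lra.
        -- assert (INR n * K * Rabs (s - t) < eps).
           { assert (0 <= INR n * K) by (apply Rmult_le_pos; auto). assert (0 < INR n * K) by lra.
             assert (Hlt : Rabs (s - t) < eps / (INR n * K + 1)) by lra.
             apply Rmult_lt_compat_l with (r := INR n * K) in Hlt; auto.
             assert (INR n * K * (eps / (INR n * K + 1)) < eps).
             { unfold Rdiv. rewrite <- Rmult_assoc. rewrite Rmult_comm.
               apply Rmult_lt_reg_l with (r := INR n * K + 1); [lra|].
               replace ((INR n * K + 1) * (/ (INR n * K + 1) * (INR n * K * eps))) with (INR n * K * eps) by (field; lra).
               nra. }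
             lra. }
           replace (INR n * (Rabs (s - t) * K)) with (INR n * K * Rabs (s - t)) by ring. lra.
    + intros eps Heps. set (sg := fjump T t). pose proof (fj_ge T Hu t) as Hsg. fold sg in Hsg.
      set (B := sg + 1). set (K := l1 n x0 * CM n M * Lsum t0 n M B).
      assert (HK : 0 <= K) by (unfold K; apply Rmult_le_pos; [apply Rmult_le_pos; auto|]; apply Lsum_nonneg; unfold B; lra).
      set (d1 := if Rlt_dec t sg then sg - t else 1).
      assert (Hd1 : 0 < d1) by (unfold d1; destruct (Rlt_dec t sg); lra).
      set (del := Rmin (Rmin 1 d1) (eps / (INR n * K + 1))).
      assert (Hdel : 0 < del) by (apply Rmin_pos; [apply Rmin_pos; lra|apply Rdiv_lt_0_compat; nra]).
      exists del. split; auto. intros s [Ts Hs] Hst.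
      pose proof (Rmin_l (Rmin 1 d1) (eps / (INR n * K + 1))). pose proof (Rmin_r (Rmin 1 d1) (eps / (INR n * K + 1))).
      pose proof (Rmin_l 1 d1). pose proof (Rmin_r 1 d1). fold del in H, H0.
      assert (Habs := Rabs_pos (s - t)).
      apply Rabs_lt_between' in Hst as Hst'.
      assert (HsB : s <= B) by (unfold B; lra).
      assert (Hbet : forall u, Rmin s sg < u < Rmax s sg -> Rabs (phi T t0 u - t) <= Rabs (s - t)).
      { intros u Hu0.
        assert (Hphi_le : phi T t0 u <= u).
        { eapply Rle_trans; [apply phi_le; auto|]. rewrite Rmax_right; [lra|].
          assert (t0 <= Rmin s sg) by (apply Rmin_glb; lra). lra. }
        destruct (Rlt_dec t sg) as [Hrs|Hrd].
        - assert (s <= t).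
          { destruct (Rle_lt_dec s t); auto. exfalso. pose proof (fj_le T Hu t s Ts r). fold sg in H3.
            assert (d1 = sg - t) by (unfold d1; destruct (Rlt_dec t sg); lra). lra. }
          rewrite Rmin_left in Hu0 by lra. rewrite Rmax_right in Hu0 by lra.
          destruct (Rle_lt_dec u t).
          + pose proof (phi_ge T t0 Tt0 u s Ts Hs ltac:(lra)).
            rewrite Rabs_left1 by lra. rewrite Rabs_left1 by lra. lra.
          + rewrite (phi_gap T t0 Tt0 Hu t u Tt Ht ltac:(lra) ltac:(fold sg; lra)).
            rewrite Rminus_diag, Rabs_R0. auto.
        - assert (sg = t) by lra. rewrite H3 in Hu0.
          destruct (Rle_lt_dec s t).
          + rewrite Rmin_left in Hu0 by lra. rewrite Rmax_right in Hu0 by lra.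
            pose proof (phi_ge T t0 Tt0 u s Ts Hs ltac:(lra)).
            rewrite Rabs_left1 by lra. rewrite Rabs_left1 by lra. lra.
          + rewrite Rmin_right in Hu0 by lra. rewrite Rmax_left in Hu0 by lra.
            pose proof (phi_ge T t0 Tt0 u t Tt Ht ltac:(lra)).
            rewrite Rabs_right by lra. rewrite Rabs_right by lra. lra. }
      assert (Hcomp : forall i, (i < n)%nat ->
        Rabs (vsub (vsub (Xs T t0 n M x0 sg) (Xs T t0 n M x0 s)) (vscal (sg - s) (mat_vec n M (Xs T t0 n M x0 t))) i)
          <= Rabs (sg - s) * Rabs (s - t) * K).
      { intros i Hi. unfold vsub, vscal, mat_vec, K.
        replace (Rabs (sg - s) * Rabs (s - t) * (l1 n x0 * CM n M * Lsum t0 n M B))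
          with (Rabs (sg - s) * Rabs (s - t) * l1 n x0 * CM n M * Lsum t0 n M B) by ring.
        apply (X_deriv_core T t0 Tt0 n M x0 s sg t B (Rabs (s - t)) i); auto; try (unfold B; lra).
        - intros k u Hu0. specialize (Hbet u Hu0).
          assert (t0 <= u) by (assert (t0 <= Rmin s sg) by (apply Rmin_glb; lra); lra).
          assert (u <= B) by (assert (Rmax s sg <= B) by (apply Rmax_lub; unfold B; lra); lra).
          assert (HpB : phi T t0 u <= B) by (eapply Rle_trans; [apply phi_le; auto|]; rewrite Rmax_right; lra).
          apply (Rle_trans _ (LL t0 k B * Rabs (phi T t0 u - t))).
          + apply (hh_lip T t0 Tt0 k (phi T t0 u) t B); [apply phi_t0; auto|lra|auto|unfold B; lra].
          + apply Rmult_le_compat_l; auto. destruct k; simpl; [lra|apply pp_nonneg; lra]. }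
      eapply Rle_trans; [apply vnorm_l1|].
      eapply Rle_trans; [apply (l1_bound n _ (Rabs (sg - s) * Rabs (s - t) * K)); auto|].
      assert (INR n * K * Rabs (s - t) <= eps).
      { apply (small_mult (INR n * K) (Rabs (s - t)) del); auto. apply Rmult_le_pos; auto. }
      pose proof (Rabs_pos (sg - s)).
      replace (INR n * (Rabs (sg - s) * Rabs (s - t) * K)) with (Rabs (sg - s) * (INR n * K * Rabs (s - t))) by ring.
      rewrite Rmult_comm. apply Rmult_le_compat_r; auto.
Qed.


Lemma cx_lin : forall T lam t0 a b z1 z2 c1 c2,
  cx_solution T lam t0 a z1 -> cx_solution T lam t0 b z2 ->
  cx_solution T lam t0 (cxadd (cxmul c1 a) (cxmul c2 b)) (fun t => cxadd (cxmul c1 (z1 t)) (cxmul c2 (z2 t))).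
Proof.
  intros T lam t0 a b z1 z2 c1 c2 [H10 H1] [H20 H2]. split; [rewrite H10, H20; auto|].
  intros t Ht. destruct (H1 t Ht) as [Hc1 Hd1]. destruct (H2 t Ht) as [Hc2 Hd2].
  pose proof (cxn_ge0 c1) as N1. pose proof (cxn_ge0 c2) as N2.
  set (S := cxnorm c1 + cxnorm c2 + 1).
  assert (HS : 0 < S) by (unfold S; lra).
  split.
  - intros eps Heps. destruct (Hc1 (eps / S)) as [d1 [Hd1p Hd1']]; [apply Rdiv_lt_0_compat; lra|].
    destruct (Hc2 (eps / S)) as [d2 [Hd2p Hd2']]; [apply Rdiv_lt_0_compat; lra|].
    exists (Rmin d1 d2). split; [apply Rmin_pos; auto|]. intros s Hs Hst.
    pose proof (Rmin_l d1 d2). pose proof (Rmin_r d1 d2).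
    specialize (Hd1' s Hs ltac:(lra)). specialize (Hd2' s Hs ltac:(lra)).
    replace (cxsub (cxadd (cxmul c1 (z1 s)) (cxmul c2 (z2 s))) (cxadd (cxmul c1 (z1 t)) (cxmul c2 (z2 t))))
      with (cxadd (cxmul c1 (cxsub (z1 s) (z1 t))) (cxmul c2 (cxsub (z2 s) (z2 t))))
      by (cxsimpl; apply cx_eq; simpl; ring).
    eapply Rle_lt_trans; [apply cxn_tri|]. rewrite !cxn_mul.
    pose proof (cxn_ge0 (cxsub (z1 s) (z1 t))). pose proof (cxn_ge0 (cxsub (z2 s) (z2 t))).
    assert (cxnorm c1 * cxnorm (cxsub (z1 s) (z1 t)) <= cxnorm c1 * (eps / S)) by (apply Rmult_le_compat_l; lra).
    assert (cxnorm c2 * cxnorm (cxsub (z2 s) (z2 t)) <= cxnorm c2 * (eps / S)) by (apply Rmult_le_compat_l; lra).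
    assert ((cxnorm c1 + cxnorm c2) * (eps / S) < eps).
    { apply Rmult_lt_reg_l with S; auto. replace (S * ((cxnorm c1 + cxnorm c2) * (eps / S))) with ((cxnorm c1 + cxnorm c2) * eps) by (field; lra).
      unfold S. nra. }
    nra.
  - intros eps Heps. destruct (Hd1 (eps / S)) as [d1 [Hd1p Hd1']]; [apply Rdiv_lt_0_compat; lra|].
    destruct (Hd2 (eps / S)) as [d2 [Hd2p Hd2']]; [apply Rdiv_lt_0_compat; lra|].
    exists (Rmin d1 d2). split; [apply Rmin_pos; auto|]. intros s Hs Hst.
    pose proof (Rmin_l d1 d2). pose proof (Rmin_r d1 d2).
    specialize (Hd1' s Hs ltac:(lra)). specialize (Hd2' s Hs ltac:(lra)).
    set (sg := fjump T t) in *.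
    replace (cxsub (cxsub (cxadd (cxmul c1 (z1 sg)) (cxmul c2 (z2 sg))) (cxadd (cxmul c1 (z1 s)) (cxmul c2 (z2 s))))
       (cxscal (sg - s) (cxmul lam (cxadd (cxmul c1 (z1 t)) (cxmul c2 (z2 t))))))
      with (cxadd (cxmul c1 (cxsub (cxsub (z1 sg) (z1 s)) (cxscal (sg - s) (cxmul lam (z1 t)))))
                  (cxmul c2 (cxsub (cxsub (z2 sg) (z2 s)) (cxscal (sg - s) (cxmul lam (z2 t))))))
      by (cxsimpl; apply cx_eq; simpl; ring).
    eapply Rle_trans; [apply cxn_tri|]. rewrite !cxn_mul.
    pose proof (Rabs_pos (sg - s)).
    set (r1 := cxnorm (cxsub (cxsub (z1 sg) (z1 s)) (cxscal (sg - s) (cxmul lam (z1 t))))) in *.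
    set (r2 := cxnorm (cxsub (cxsub (z2 sg) (z2 s)) (cxscal (sg - s) (cxmul lam (z2 t))))) in *.
    assert (cxnorm c1 * r1 <= cxnorm c1 * (eps / S * Rabs (sg - s))) by (apply Rmult_le_compat_l; lra).
    assert (cxnorm c2 * r2 <= cxnorm c2 * (eps / S * Rabs (sg - s))) by (apply Rmult_le_compat_l; lra).
    assert ((cxnorm c1 + cxnorm c2) * (eps / S) <= eps).
    { apply Rmult_le_reg_l with S; auto. replace (S * ((cxnorm c1 + cxnorm c2) * (eps / S))) with ((cxnorm c1 + cxnorm c2) * eps) by (field; lra).
      unfold S. nra. }
    assert ((cxnorm c1 + cxnorm c2) * (eps / S) * Rabs (sg - s) <= eps * Rabs (sg - s)) by (apply Rmult_le_compat_r; auto).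
    nra.
Qed.


Definition Wf (n : nat) (w : nat -> Cpx) (v : vec) : Cpx :=
  (rsum n (fun i => fst (w i) * v i), rsum n (fun i => snd (w i) * v i)).
Definition Wsum (n : nat) (w : nat -> Cpx) : R := rsum n (fun i => cxnorm (w i)).

Lemma Wsum_nonneg : forall n w, 0 <= Wsum n w.
Proof. intros. apply rsum_nonneg. intros; apply cxn_ge0. Qed.

Lemma Wf_sub : forall n w a b, Wf n w (vsub a b) = cxsub (Wf n w a) (Wf n w b).
Proof. intros. unfold Wf, vsub. apply cx_eq; simpl; rewrite <- rsum_minus; apply rsum_ext; intros; ring. Qed.

Lemma Wf_scal : forall n w c a, Wf n w (vscal c a) = cxscal c (Wf n w a).
Proof. intros. unfold Wf, vscal. apply cx_eq; simpl; rewrite <- rsum_scal; apply rsum_ext; intros; ring. Qed.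

Lemma comp_vnorm : forall n v i, (i < n)%nat -> Rabs (v i) <= vnorm n v.
Proof.
  intros. unfold vnorm. rewrite <- sqrt_Rsqr_abs. apply sqrt_le_1_alt.
  replace (Rsqr (v i)) with (v i ^ 2) by (unfold Rsqr; ring).
  apply (rsum_term_le n (fun i => v i ^ 2)); auto. intros; apply pow2_ge_0.
Qed.

Lemma vnorm_nonneg : forall n v, 0 <= vnorm n v.
Proof. intros. apply sqrt_pos. Qed.

Lemma Wf_norm : forall n w v, cxnorm (Wf n w v) <= Wsum n w * vnorm n v.
Proof.
  intros n w v.
  assert (forall k, (k <= n)%nat -> cxnorm (Wf k w v) <= rsum k (fun i => cxnorm (w i) * vnorm n v)).
  { induction k; intros Hk.
    - unfold Wf; simpl. change (0, 0) with cx0. rewrite cxn_0. lra.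
    - replace (Wf (S k) w v) with (cxadd (Wf k w v) (cxscal (v k) (w k))) by (unfold Wf; apply cx_eq; simpl; ring).
      eapply Rle_trans; [apply cxn_tri|]. simpl rsum. rewrite cxn_scal.
      specialize (IHk ltac:(lia)). pose proof (comp_vnorm n v k ltac:(lia)). pose proof (cxn_ge0 (w k)).
      pose proof (Rabs_pos (v k)). nra. }
  eapply Rle_trans; [apply H; lia|]. unfold Wsum. rewrite Rmult_comm, <- rsum_scal. right; apply rsum_ext; intros; ring.
Qed.

Lemma Wf_mat : forall n w Mc lam,
  (forall j, (j < n)%nat -> rsum n (fun i => fst (w i) * Mc i j) = fst lam * fst (w j) - snd lam * snd (w j)) ->
  (forall j, (j < n)%nat -> rsum n (fun i => snd (w i) * Mc i j) = fst lam * snd (w j) + snd lam * fst (w j)) ->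
  forall v, Wf n w (mat_vec n Mc v) = cxmul lam (Wf n w v).
Proof.
  intros n w Mc lam H1 H2 v. unfold Wf, mat_vec, cxmul. apply cx_eq; simpl.
  - rewrite (rsum_ext n _ (fun i => rsum n (fun j => fst (w i) * Mc i j * v j))) by (intros; rewrite <- rsum_scal; apply rsum_ext; intros; ring).
    rewrite rsum_swap.
    rewrite (rsum_ext n _ (fun j => (fst lam * fst (w j) - snd lam * snd (w j)) * v j)).
    + rewrite (rsum_ext n _ (fun j => fst lam * (fst (w j) * v j) - snd lam * (snd (w j) * v j))) by (intros; ring).
      rewrite rsum_minus, !rsum_scal. ring.
    + intros j Hj. rewrite <- H1 by auto. rewrite Rmult_comm, <- rsum_scal. apply rsum_ext; intros; ring.
  - rewrite (rsum_ext n _ (fun i => rsum n (fun j => snd (w i) * Mc i j * v j))) by (intros; rewrite <- rsum_scal; apply rsum_ext; intros; ring).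
    rewrite rsum_swap.
    rewrite (rsum_ext n _ (fun j => (fst lam * snd (w j) + snd lam * fst (w j)) * v j)).
    + rewrite (rsum_ext n _ (fun j => fst lam * (snd (w j) * v j) + snd lam * (fst (w j) * v j))) by (intros; ring).
      rewrite rsum_plus, !rsum_scal. ring.
    + intros j Hj. rewrite <- H2 by auto. rewrite Rmult_comm, <- rsum_scal. apply rsum_ext; intros; ring.
Qed.

Lemma Y_sol : forall T n Mc t0 x0 X w lam,
  aut_solution T n Mc t0 x0 X ->
  (forall v, Wf n w (mat_vec n Mc v) = cxmul lam (Wf n w v)) ->
  cx_solution T lam t0 (Wf n w x0) (fun t => Wf n w (X t)).
Proof.
  intros T n Mc t0 x0 X w lam [H0 H] HM. split.
  - unfold Wf. apply cx_eq; simpl; apply rsum_ext; intros; rewrite H0; auto.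
  - intros t Ht. destruct (H t Ht) as [Hc Hd]. pose proof (Wsum_nonneg n w) as HW.
    set (W := Wsum n w) in *.
    split.
    + intros eps Heps. destruct (Hc (eps / (W + 1))) as [d [Hdp Hd']]; [apply Rdiv_lt_0_compat; lra|].
      exists d; split; auto. intros s Hs Hst. specialize (Hd' s Hs Hst).
      rewrite <- Wf_sub. eapply Rle_lt_trans; [apply Wf_norm|]. fold W.
      pose proof (vnorm_nonneg n (vsub (X s) (X t))).
      apply Rle_lt_trans with ((W + 1) * vnorm n (vsub (X s) (X t))); [nra|].
      apply Rmult_lt_compat_l with (r := W + 1) in Hd'; [|lra].
      replace ((W + 1) * (eps / (W + 1))) with eps in Hd' by (field; lra). auto.
    + intros eps Heps. destruct (Hd (eps / (W + 1))) as [d [Hdp Hd']]; [apply Rdiv_lt_0_compat; lra|].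
      exists d; split; auto. intros s Hs Hst. specialize (Hd' s Hs Hst).
      rewrite <- HM, <- Wf_scal, <- !Wf_sub. eapply Rle_trans; [apply Wf_norm|]. fold W.
      pose proof (Rabs_pos (fjump T t - s)).
      set (v := vnorm n _) in *. assert (0 <= v) by apply vnorm_nonneg.
      apply Rle_trans with ((W + 1) * v); [nra|].
      apply Rmult_le_compat_l with (r := W + 1) in Hd'; [|lra].
      replace ((W + 1) * (eps / (W + 1) * Rabs (fjump T t - s))) with (eps * Rabs (fjump T t - s)) in Hd' by (field; lra). auto.
Qed.


Lemma sum_delta : forall n j f, (j < n)%nat -> rsum n (fun i => if (i =? j)%nat then f i else 0) = f j.
Proof.
  intros n j f Hj. rewrite (rsum_single n _ j Hj).
  - rewrite Nat.eqb_refl; auto.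
  - intros k Hk Hkj. destruct (Nat.eqb_spec k j); [congruence|auto].
Qed.

Lemma vnorm_delta : forall n i0 dl f, (i0 < n)%nat -> 0 <= dl ->
  (forall i, (i < n)%nat -> f i = if (i =? i0)%nat then dl else 0) -> vnorm n f = dl.
Proof.
  intros n i0 dl f Hi0 Hdl Hf. unfold vnorm.
  rewrite (rsum_ext n _ (fun i => if (i =? i0)%nat then dl ^ 2 else 0)).
  - rewrite sum_delta by auto. apply sqrt_pow2; auto.
  - intros i Hi. rewrite Hf by auto. destruct (i =? i0)%nat; simpl; ring.
Qed.

Theorem mainTheorem5 (T : R -> Prop) (n m : nat) (A B : nat -> nat -> R) :
  is_time_scale T -> unbounded_above T -> bounded_graininess T ->
  positive_control_system T n m A B ->
  positively_stabilizable T n m A B ->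
  forall lam : Cpx, in_spec n A lam -> ~ in_S_T T lam ->
    has_rank n (n + m) (pbh_matrix n A B lam) n.
Proof.
  intros HT Hu _ _ [Kf [_ [Ks [al [V [HK1 [Hal [[HV0 HVo] Hst]]]]]]]] lam _ HnS.
  apply rank_full. intros w Hw i0 Hi0. apply NNPP. intro Hwi0. apply HnS.
  set (Mc := closed_loop m A B Kf).
  assert (Hfst : forall j, (j < n + m)%nat -> rsum n (fun i => fst (cxmul (w i) (pbh_matrix n A B lam i j))) = 0).
  { intros j Hj. rewrite <- fst_cxsum. rewrite Hw; auto. }
  assert (Hsnd : forall j, (j < n + m)%nat -> rsum n (fun i => snd (cxmul (w i) (pbh_matrix n A B lam i j))) = 0).
  { intros j Hj. rewrite <- snd_cxsum. rewrite Hw; auto. }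
  assert (HA1 : forall j, (j < n)%nat -> rsum n (fun i => fst (w i) * A i j) = fst lam * fst (w j) - snd lam * snd (w j)).
  { intros j Hj. specialize (Hfst j ltac:(lia)).
    rewrite (rsum_ext n _ (fun i => (if (i =? j)%nat then fst (w i) * fst lam - snd (w i) * snd lam else 0) - fst (w i) * A i j)) in Hfst.
    - rewrite rsum_minus, sum_delta in Hfst by auto. lra.
    - intros i Hi. unfold pbh_matrix. assert ((j <? n)%nat = true) by (apply Nat.ltb_lt; auto). rewrite H.
      destruct (i =? j)%nat; unfold cxmul, cxsub, cxR, cx0; simpl; ring. }
  assert (HA2 : forall j, (j < n)%nat -> rsum n (fun i => snd (w i) * A i j) = fst lam * snd (w j) + snd lam * fst (w j)).
  { intros j Hj. specialize (Hsnd j ltac:(lia)).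
    rewrite (rsum_ext n _ (fun i => (if (i =? j)%nat then fst (w i) * snd lam + snd (w i) * fst lam else 0) - snd (w i) * A i j)) in Hsnd.
    - rewrite rsum_minus, sum_delta in Hsnd by auto. lra.
    - intros i Hi. unfold pbh_matrix. assert ((j <? n)%nat = true) by (apply Nat.ltb_lt; auto). rewrite H.
      destruct (i =? j)%nat; unfold cxmul, cxsub, cxR, cx0; simpl; ring. }
  assert (HB1 : forall k, (k < m)%nat -> rsum n (fun i => fst (w i) * B i k) = 0).
  { intros k Hk. rewrite <- (Hfst (n + k)%nat) by lia. apply rsum_ext. intros i Hi. unfold pbh_matrix.
    assert ((n + k <? n)%nat = false) by (apply Nat.ltb_ge; lia). rewrite H.
    replace (n + k - n)%nat with k by lia. unfold cxmul, cxR; simpl; ring. }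
  assert (HB2 : forall k, (k < m)%nat -> rsum n (fun i => snd (w i) * B i k) = 0).
  { intros k Hk. rewrite <- (Hsnd (n + k)%nat) by lia. apply rsum_ext. intros i Hi. unfold pbh_matrix.
    assert ((n + k <? n)%nat = false) by (apply Nat.ltb_ge; lia). rewrite H.
    replace (n + k - n)%nat with k by lia. unfold cxmul, cxR; simpl; ring. }
  assert (HM1 : forall j, (j < n)%nat -> rsum n (fun i => fst (w i) * Mc i j) = fst lam * fst (w j) - snd lam * snd (w j)).
  { intros j Hj. unfold Mc, closed_loop.
    rewrite (rsum_ext n _ (fun i => fst (w i) * A i j + rsum m (fun k => fst (w i) * B i k * Kf k j)))
      by (intros; rewrite Rmult_plus_distr_l, <- rsum_scal; f_equal; apply rsum_ext; intros; ring).
    rewrite rsum_plus, HA1 by auto. rewrite rsum_swap.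
    rewrite rsum_zero; [ring|]. intros k Hk.
    rewrite (rsum_ext n _ (fun i => Kf k j * (fst (w i) * B i k))) by (intros; ring).
    rewrite rsum_scal, HB1 by auto. ring. }
  assert (HM2 : forall j, (j < n)%nat -> rsum n (fun i => snd (w i) * Mc i j) = fst lam * snd (w j) + snd lam * fst (w j)).
  { intros j Hj. unfold Mc, closed_loop.
    rewrite (rsum_ext n _ (fun i => snd (w i) * A i j + rsum m (fun k => snd (w i) * B i k * Kf k j)))
      by (intros; rewrite Rmult_plus_distr_l, <- rsum_scal; f_equal; apply rsum_ext; intros; ring).
    rewrite rsum_plus, HA2 by auto. rewrite rsum_swap.
    rewrite rsum_zero; [ring|]. intros k Hk.
    rewrite (rsum_ext n _ (fun i => Kf k j * (snd (w i) * B i k))) by (intros; ring).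
    rewrite rsum_scal, HB2 by auto. ring. }
  assert (HWM := Wf_mat n w Mc lam HM1 HM2).
  destruct (HVo vzero HV0) as [r0 [Hr0 Hr0']].
  set (dl := r0 / 2). assert (Hdl : 0 < dl) by (unfold dl; lra).
  set (x0v := fun i : nat => if (i =? i0)%nat then dl else 0).
  assert (Hx0n : vnorm n x0v = dl) by (apply (vnorm_delta n i0); auto; lra).
  assert (HVx : V x0v).
  { apply Hr0'. rewrite (vnorm_delta n i0 dl); [unfold dl; lra|auto|lra|].
    intros i Hi. unfold vsub, vzero, x0v. destruct (i =? i0)%nat; ring. }
  assert (Hx0nn : Defs.nonneg n x0v) by (intros i Hi; unfold x0v; destruct (i =? i0)%nat; lra).
  set (a := cxnorm (w i0)).
  assert (Ha : 0 < a).
  { unfold a. pose proof (cxn_ge0 (w i0)). destruct (Req_dec (cxnorm (w i0)) 0); [|lra].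
    exfalso; apply Hwi0; apply cxn_eq0; auto. }
  set (W := Wsum n w). assert (HW : 0 <= W) by apply Wsum_nonneg.
  assert (HKs0 : 0 <= Ks) by lra.
  set (Y0 := Wf n w x0v).
  assert (HY0 : cxnorm Y0 = dl * a).
  { replace Y0 with (cxscal dl (w i0)).
    - rewrite cxn_scal, Rabs_right by lra. auto.
    - unfold Y0, Wf, x0v. apply cx_eq; simpl.
      + rewrite (rsum_ext n _ (fun i => if (i =? i0)%nat then fst (w i) * dl else 0)) by (intros i Hi; destruct (i =? i0)%nat; ring).
        rewrite sum_delta; auto; ring.
      + rewrite (rsum_ext n _ (fun i => if (i =? i0)%nat then snd (w i) * dl else 0)) by (intros i Hi; destruct (i =? i0)%nat; ring).
        rewrite sum_delta; auto; ring. }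
  exists (Rmax 1 (W * Ks / a)), al, (fun _ => True). split; [apply Rmax_l|]. split; auto. split.
  { split; auto. intros z _. exists 1; split; [lra|auto]. }
  intros t0 t Tt0 Tt Hle z0 _ z Hz.
  set (X := Xs T t0 n Mc x0v).
  assert (HX : aut_solution T n Mc t0 x0v X) by (apply sol_exists; auto).
  assert (HY := Y_sol T n Mc t0 x0v X w lam HX HWM). fold Y0 in HY.
  pose proof (cx_lin T lam t0 z0 Y0 z (fun t => Wf n w (X t)) Y0 (cxneg z0) Hz HY) as Hd.
  replace (cxadd (cxmul Y0 z0) (cxmul (cxneg z0) Y0)) with cx0 in Hd by (cxsimpl; apply cx_eq; simpl; ring).
  pose proof (cx_unique T HT Hu lam t0 _ Tt0 Hd t Tt Hle) as Hdt. simpl in Hdt.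
  assert (Heq : cxmul Y0 (z t) = cxmul z0 (Wf n w (X t))).
  { destruct Y0, (z t), z0, (Wf n w (X t)). unfold cxadd, cxmul, cxneg, cx0 in Hdt. simpl in Hdt.
    injection Hdt; intros. apply cx_eq; simpl; lra. }
  apply (f_equal cxnorm) in Heq. rewrite !cxn_mul, HY0 in Heq.
  pose proof (Hst t0 t Tt0 Tt Hle x0v HVx Hx0nn X HX) as HXt. rewrite Hx0n in HXt.
  pose proof (Wf_norm n w (X t)) as HYt. fold W in HYt.
  set (E := exp (- al * (t - t0))) in *. assert (HE : 0 < E) by apply exp_pos.
  pose proof (cxn_ge0 z0). pose proof (cxn_ge0 (z t)). pose proof (vnorm_nonneg n (X t)).
  assert (Hb1 : cxnorm (Wf n w (X t)) <= W * (Ks * E * dl)).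
  { eapply Rle_trans; [apply HYt|]. apply Rmult_le_compat_l; auto. }
  assert (Hb2 : dl * a * cxnorm (z t) <= cxnorm z0 * (W * (Ks * E * dl))).
  { rewrite Heq. apply Rmult_le_compat_l; auto. }
  assert (Hb3 : cxnorm (z t) <= W * Ks / a * E * cxnorm z0).
  { apply Rmult_le_reg_l with (dl * a); [nra|].
    replace (dl * a * (W * Ks / a * E * cxnorm z0)) with (cxnorm z0 * (W * (Ks * E * dl))) by (field; lra). auto. }
  eapply Rle_trans; [apply Hb3|].
  apply Rmult_le_compat_r; auto. apply Rmult_le_compat_r; [lra|]. apply Rmax_r.
Qed.
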